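(* Let $v$ be a typical weight and let $X$ be an initial space such that for every $f\in X$ and $0\le r<1$ the function $f_r(z)=f(rz)$ is in $X$ and $\sup_{0\le r<1}\|f_r\|_X\le C\|f\|_X$ for a constant $C$ independent of $f$. Let $T$ be an intrinsic operator on $\mathcal{H}(\mathbb{D})$ such that $T:X\to\mathcal{B}_v$ is bounded and $Tf_r\in\mathcal{B}_{v,0}$ for all $f\in X$, $0\le r<1$. Then the following are equivalent: (i) $T:X\to\mathcal{B}_v$ is compact; (ii) $T:X\to\mathcal{B}_{v,0}$ is compact; (iii) $\lim_{|z|\to1}v(z)\|T^*K_{z,1}^{\mathcal{B}}\|=0$.
   Context: $\mathcal{H}(\mathbb{D})$ is the space of holomorphic functions on the unit disk $\mathbb{D}$ with the topology $\tau_{uc}$ of uniform convergence on compact subsets. A linear operator $T$ on $\mathcal{H}(\mathbb{D})$ is intrinsic if it maps $\tau_{uc}$-convergent sequences to $\tau_{uc}$-convergent sequences. An initial space is a Banach space $X\subset\mathcal{H}(\mathbb{D})$ containing the polynomials such that every sequence in the closed unit ball of $X$ has a subsequence converging in $\tau_{uc}$ to some function in $X$. A typical weight is a continuous radial $v:\mathbb{D}\to(0,1]$, non-increasing in $|z|$, with $v(z)\to0$ as $|z|\to1$. $\mathcal{B}_v=\{f:\sup_z v(z)|f'(z)|<\infty\}$ with norm $|f(0)|+\sup_z v(z)|f'(z)|$, $\mathcal{B}_{v,0}=\{f:\lim_{|z|\to1}v(z)|f'(z)|=0\}$. $K_{z,1}^{\mathcal{B}}$ is the derivative point evaluation $g\mapsto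 g'(z)$ on $\mathcal{B}_v$ and $T^*:\mathcal{B}_v^*\to X^*$ the adjoint of $T:X\to\mathcal{B}_v$. *)

(* Defs.v *)
From Stdlib Require Import Reals Lra ClassicalEpsilon.
From Coquelicot Require Import Coquelicot.
Open Scope R_scope.

Definition Dsk : Type := {z : C | Cmod z < 1}.

Lemma Cmod0_lt1 : Cmod (RtoC 0) < 1.
Proof. rewrite Cmod_0. lra. Qed.

Definition D0 : Dsk := exist _ (RtoC 0) Cmod0_lt1.

(* Functions on the disk are  Dsk -> C.  [ext f] extends f by 0 outside D
   (irrelevant for derivatives since D is open). *)
Definition ext (f : Dsk -> C) (w : C) : C :=
  match Rlt_dec (Cmod w) 1 with
  | left H => f (exist _ w H)
  | right _ => RtoC 0
  end.

Definition holo (f : Dsk -> C) : Prop :=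
  forall z : Dsk, @ex_derive C_AbsRing C_NormedModule (ext f) (proj1_sig z).

Definition hder (f : Dsk -> C) (z : Dsk) : C :=
  epsilon (inhabits (RtoC 0))
    (fun l => @is_derive C_AbsRing C_NormedModule (ext f) (proj1_sig z) l).

Definition fadd (f g : Dsk -> C) : Dsk -> C := fun z => Cplus (f z) (g z).
Definition fscal (a : C) (f : Dsk -> C) : Dsk -> C := fun z => Cmult a (f z).
Definition fsub (f g : Dsk -> C) : Dsk -> C := fun z => Cminus (f z) (g z).
Definition fzero : Dsk -> C := fun _ => RtoC 0.

Fixpoint peval (l : list C) (w : C) : C :=
  match l with
  | nil => RtoC 0
  | cons a l' => Cplus a (Cmult w (peval l' w))
  end.
Definition poly_fun (l : list C) : Dsk -> C := fun z => peval l (proj1_sig z).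

Definition dil (r : R) (f : Dsk -> C) : Dsk -> C :=
  fun z => ext f (Cmult (RtoC r) (proj1_sig z)).

(* convergence in tau_uc: uniform convergence on every compact subset of D,
   i.e. on every closed disk |z| <= r with r < 1 *)
Definition uc_conv (fn : nat -> Dsk -> C) (f : Dsk -> C) : Prop :=
  forall r, 0 <= r < 1 -> forall eps, 0 < eps -> exists N : nat,
    forall n, (N <= n)%nat -> forall z : Dsk, Cmod (proj1_sig z) <= r ->
      Cmod (Cminus (fn n z) (f z)) < eps.

Definition strict_incr (phi : nat -> nat) : Prop :=
  forall n, (phi n < phi (S n))%nat.

Definition intrinsic (T : (Dsk -> C) -> (Dsk -> C)) : Prop :=
  (forall f, holo f -> holo (T f)) /\
  (forall f g, holo f -> holo g -> T (fadd f g) = fadd (T f) (T g)) /\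
  (forall a f, holo f -> T (fscal a f) = fscal a (T f)) /\
  (forall fn f, (forall n, holo (fn n)) -> holo f -> uc_conv fn f ->
     exists g, uc_conv (fun n => T (fn n)) g).

Record banach_subspace (X : (Dsk -> C) -> Prop) (nX : (Dsk -> C) -> R) : Prop := {
  bs_holo : forall f, X f -> holo f;
  bs_zero : X fzero;
  bs_add : forall f g, X f -> X g -> X (fadd f g);
  bs_scal : forall a f, X f -> X (fscal a f);
  bs_norm_ge0 : forall f, X f -> 0 <= nX f;
  bs_norm_eq0 : forall f, X f -> nX f = 0 -> f = fzero;
  bs_norm_scal : forall a f, X f -> nX (fscal a f) = Cmod a * nX f;
  bs_norm_tri : forall f g, X f -> X g -> nX (fadd f g) <= nX f + nX g;
  bs_complete : forall fn : nat -> Dsk -> C, (forall n, X (fn n)) ->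
    (forall eps, 0 < eps -> exists N : nat, forall m n, (N <= m)%nat -> (N <= n)%nat ->
        nX (fsub (fn m) (fn n)) < eps) ->
    exists f, X f /\ (forall eps, 0 < eps -> exists N : nat, forall n, (N <= n)%nat ->
        nX (fsub (fn n) f) < eps)
}.

Definition initial_space (X : (Dsk -> C) -> Prop) (nX : (Dsk -> C) -> R) : Prop :=
  banach_subspace X nX /\
  (forall l : list C, X (poly_fun l)) /\
  (forall fn : nat -> Dsk -> C, (forall n, X (fn n) /\ nX (fn n) <= 1) ->
     exists phi f, strict_incr phi /\ X f /\ uc_conv (fun n => fn (phi n)) f).

Definition typical_weight (v : Dsk -> R) : Prop :=
  (forall z : Dsk, forall eps, 0 < eps -> exists delta, 0 < delta /\
     forall w : Dsk, Cmod (Cminus (proj1_sig w) (proj1_sig z)) < delta ->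
       Rabs (v w - v z) < eps) /\
  (forall z w : Dsk, Cmod (proj1_sig z) = Cmod (proj1_sig w) -> v z = v w) /\
  (forall z : Dsk, 0 < v z <= 1) /\
  (forall z w : Dsk, Cmod (proj1_sig z) <= Cmod (proj1_sig w) -> v w <= v z) /\
  (forall eps, 0 < eps -> exists rho, rho < 1 /\
     forall z : Dsk, rho < Cmod (proj1_sig z) -> v z < eps).

Definition Bv (v : Dsk -> R) (f : Dsk -> C) : Prop :=
  holo f /\ exists M, forall z : Dsk, v z * Cmod (hder f z) <= M.

Definition Bv0 (v : Dsk -> R) (f : Dsk -> C) : Prop :=
  Bv v f /\ forall eps, 0 < eps -> exists rho, rho < 1 /\
     forall z : Dsk, rho < Cmod (proj1_sig z) -> v z * Cmod (hder f z) < eps.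

Definition Bv_norm (v : Dsk -> R) (f : Dsk -> C) : R :=
  Cmod (f D0) + real (Lub_Rbar (fun t => exists z : Dsk, t = v z * Cmod (hder f z))).

Definition bounded_op (X : (Dsk -> C) -> Prop) (nX : (Dsk -> C) -> R) (v : Dsk -> R)
    (T : (Dsk -> C) -> (Dsk -> C)) : Prop :=
  (forall f, X f -> Bv v (T f)) /\
  exists M, forall f, X f -> Bv_norm v (T f) <= M * nX f.

Definition compact_op (X : (Dsk -> C) -> Prop) (nX : (Dsk -> C) -> R) (v : Dsk -> R)
    (Y : (Dsk -> C) -> Prop) (T : (Dsk -> C) -> (Dsk -> C)) : Prop :=
  (forall f, X f -> Y (T f)) /\
  forall fn : nat -> Dsk -> C, (forall n, X (fn n)) ->
    (exists M, forall n, nX (fn n) <= M) ->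
    exists phi g, strict_incr phi /\ Y g /\
      forall eps, 0 < eps -> exists N : nat, forall n, (N <= n)%nat ->
        Bv_norm v (fsub (T (fn (phi n))) g) < eps.

(* || T^* K^B_{z,1} ||_{X^*} = sup { |(Tf)'(z)| : f in X, ||f||_X <= 1 } *)
Definition adj_Kder_norm (X : (Dsk -> C) -> Prop) (nX : (Dsk -> C) -> R)
    (T : (Dsk -> C) -> (Dsk -> C)) (z : Dsk) : R :=
  real (Lub_Rbar (fun t => exists f, X f /\ nX f <= 1 /\ t = Cmod (hder (T f) z))).

(* Main.v *)
Require Import Defs.
From Stdlib Require Import Reals Lra Lia ClassicalEpsilon ProofIrrelevance FunctionalExtensionality.
From Coquelicot Require Import Coquelicot.
Open Scope R_scope.


Definition Ccont (F : C -> C) (w : C) : Prop :=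
  forall eps, 0 < eps -> exists d, 0 < d /\
    forall u, Cmod (u - w) < d -> Cmod (F u - F w) < eps.

Lemma Cmod_sym (a b : C) : Cmod (a - b) = Cmod (b - a).
Proof. replace (a - b)%C with (- (b - a))%C by ring. apply Cmod_opp. Qed.

Lemma Cmod_tri_sub (a b c : C) : Cmod (a - c) <= Cmod (a - b) + Cmod (b - c).
Proof. replace (a - c)%C with ((a - b) + (b - c))%C by ring. apply Cmod_triangle. Qed.

Lemma Cmod_sub_le (a b : C) : Cmod a <= Cmod b + Cmod (a - b).
Proof. replace a with (b + (a - b))%C at 1 by ring. apply Cmod_triangle. Qed.

Lemma Ccont_const (c w : C) : Ccont (fun _ => c) w.
Proof. intros e He. exists 1. split. lra. intros u _.
  replace (c - c)%C with (RtoC 0) by ring. rewrite Cmod_0. lra. Qed.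

Lemma Ccont_id (w : C) : Ccont (fun u => u) w.
Proof. intros e He. exists e. split. lra. intros u Hu. exact Hu. Qed.

Lemma Ccont_add F G w : Ccont F w -> Ccont G w -> Ccont (fun u => F u + G u)%C w.
Proof.
  intros HF HG e He.
  destruct (HF (e/2)) as [d1 [Hd1 H1]]. lra.
  destruct (HG (e/2)) as [d2 [Hd2 H2]]. lra.
  exists (Rmin d1 d2). split. apply Rmin_pos; lra.
  intros u Hu.
  replace (F u + G u - (F w + G w))%C with ((F u - F w) + (G u - G w))%C by ring.
  eapply Rle_lt_trans. apply Cmod_triangle.
  specialize (H1 u (Rlt_le_trans _ _ _ Hu (Rmin_l _ _))).
  specialize (H2 u (Rlt_le_trans _ _ _ Hu (Rmin_r _ _))). lra.
Qed.

Lemma Ccont_opp F w : Ccont F w -> Ccont (fun u => - F u)%C w.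
Proof.
  intros HF e He. destruct (HF e He) as [d [Hd H]]. exists d. split. auto.
  intros u Hu. replace (- F u - - F w)%C with (- (F u - F w))%C by ring.
  rewrite Cmod_opp. auto.
Qed.

Lemma Ccont_sub F G w : Ccont F w -> Ccont G w -> Ccont (fun u => F u - G u)%C w.
Proof. intros. apply (Ccont_add F (fun u => - G u)%C). auto. apply Ccont_opp; auto. Qed.

Lemma Ccont_mul F G w : Ccont F w -> Ccont G w -> Ccont (fun u => F u * G u)%C w.
Proof.
  intros HF HG e He.
  set (A := Cmod (F w)). set (B := Cmod (G w)).
  assert (HA : 0 <= A) by apply Cmod_ge_0. assert (HB : 0 <= B) by apply Cmod_ge_0.
  set (eta := Rmin 1 (e / (2 * (A + B + 1)))).
  assert (Heta : 0 < eta). { apply Rmin_pos. lra. apply Rdiv_lt_0_compat; lra. }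
  assert (Heta1 : eta <= 1) by apply Rmin_l.
  assert (Heta2 : eta * (A + B + 1) <= e / 2).
  { assert (eta <= e / (2 * (A + B + 1))) by apply Rmin_r.
    apply Rmult_le_compat_r with (r := A + B + 1) in H; [|lra].
    replace (e / (2 * (A + B + 1)) * (A + B + 1)) with (e/2) in H by (field; lra). lra. }
  destruct (HF eta Heta) as [d1 [Hd1 H1]].
  destruct (HG eta Heta) as [d2 [Hd2 H2]].
  exists (Rmin d1 d2). split. apply Rmin_pos; lra.
  intros u Hu.
  specialize (H1 u (Rlt_le_trans _ _ _ Hu (Rmin_l _ _))).
  specialize (H2 u (Rlt_le_trans _ _ _ Hu (Rmin_r _ _))).
  replace (F u * G u - F w * G w)%C with ((F u - F w) * G u + F w * (G u - G w))%C by ring.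
  eapply Rle_lt_trans. apply Cmod_triangle. rewrite !Cmod_mult.
  assert (HGu : Cmod (G u) <= B + eta).
  { pose proof (Cmod_sub_le (G u) (G w)). fold B in H. lra. }
  assert (0 <= Cmod (F u - F w)) by apply Cmod_ge_0.
  assert (0 <= Cmod (G u - G w)) by apply Cmod_ge_0.
  assert (Cmod (F u - F w) * Cmod (G u) <= eta * (B + eta)).
  { apply Rmult_le_compat; try lra. apply Cmod_ge_0. }
  assert (A * Cmod (G u - G w) <= A * eta) by (apply Rmult_le_compat_l; lra).
  assert (eta * (B + eta) <= eta * (B + 1)) by (apply Rmult_le_compat_l; lra).
  fold A. nra.
Qed.

Lemma Ccont_inv G w : Ccont G w -> G w <> RtoC 0 -> Ccont (fun u => / G u)%C w.
Proof.
  intros HG Hn e He.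
  set (B := Cmod (G w)).
  assert (HB : 0 < B) by (apply Cmod_gt_0; auto).
  set (eta := Rmin (B/2) (e * B * B / 2)).
  assert (Heta : 0 < eta). { apply Rmin_pos. lra. apply Rdiv_lt_0_compat; [|lra]. 
    apply Rmult_lt_0_compat; [apply Rmult_lt_0_compat|]; lra. }
  destruct (HG eta Heta) as [d [Hd H]].
  exists d. split. auto. intros u Hu. specialize (H u Hu).
  assert (HGu : B / 2 <= Cmod (G u)).
  { pose proof (Cmod_sub_le (G w) (G u)). rewrite Cmod_sym in H0. fold B in H0.
    assert (eta <= B/2) by apply Rmin_l. lra. }
  assert (Gu0 : G u <> RtoC 0). { intro E. rewrite E, Cmod_0 in HGu. lra. }
  replace (/ G u - / G w)%C with (- (G u - G w) / (G u * G w))%C by (field; auto).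
  rewrite Cmod_div, Cmod_opp, Cmod_mult. fold B.
  2:{ intro E. apply (f_equal Cmod) in E. rewrite Cmod_mult, Cmod_0 in E. fold B in E.
       assert (0 < Cmod (G u) * B) by (apply Rmult_lt_0_compat; lra). lra. }
  apply Rlt_le_trans with (eta / (B / 2 * B)).
  { unfold Rdiv. apply Rle_lt_trans with (Cmod (G u - G w) * / (B/2 * B)).
    apply Rmult_le_compat_l. apply Cmod_ge_0. apply Rinv_le_contravar.
    apply Rmult_lt_0_compat; lra. apply Rmult_le_compat_r; lra.
    apply Rmult_lt_compat_r. apply Rinv_0_lt_compat, Rmult_lt_0_compat; lra. auto. }
  assert (eta <= e * B * B / 2) by apply Rmin_r.
  apply Rle_trans with ((e * B * B / 2) / (B / 2 * B)).
  unfold Rdiv. apply Rmult_le_compat_r. left. apply Rinv_0_lt_compat, Rmult_lt_0_compat; lra. lra.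
  right. field. lra.
Qed.


Definition CD (F : C -> C) (w L : C) : Prop :=
  exists q d, 0 < d /\ q w = L /\ Ccont q w /\
    forall u, Cmod (u - w) < d -> F u = (F w + q u * (u - w))%C.

Lemma CD_eps F w L : CD F w L -> forall e, 0 < e -> exists dl, 0 < dl /\
  forall u, Cmod (u - w) < dl -> Cmod (F u - F w - L * (u - w)) <= e * Cmod (u - w).
Proof.
  intros [q [d [Hd [Hq [Hc HF]]]]] e He.
  destruct (Hc e He) as [d2 [Hd2 H2]].
  exists (Rmin d d2). split. apply Rmin_pos; lra. intros u Hu.
  rewrite (HF u (Rlt_le_trans _ _ _ Hu (Rmin_l _ _))).
  replace (F w + q u * (u - w) - F w - L * (u - w))%C with ((q u - q w) * (u - w))%C
    by (rewrite Hq; ring).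
  rewrite Cmod_mult. apply Rmult_le_compat_r. apply Cmod_ge_0.
  left. apply H2. exact (Rlt_le_trans _ _ _ Hu (Rmin_r _ _)).
Qed.

Lemma CD_cont F w L : CD F w L -> Ccont F w.
Proof.
  intros H e He. destruct (CD_eps F w L H 1 Rlt_0_1) as [d [Hd H1]].
  set (A := Cmod L). assert (0 <= A) by apply Cmod_ge_0.
  exists (Rmin d (e / (A + 2))). split. apply Rmin_pos; [lra|apply Rdiv_lt_0_compat; lra].
  intros u Hu. specialize (H1 u (Rlt_le_trans _ _ _ Hu (Rmin_l _ _))).
  assert (Hu2 : Cmod (u - w) < e / (A + 2)) by exact (Rlt_le_trans _ _ _ Hu (Rmin_r _ _)).
  pose proof (Cmod_sub_le (F u - F w) (L * (u - w))) as HH.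
  rewrite Cmod_mult in HH. fold A in HH.
  assert (Cmod (u - w) * (A + 2) < e).
  { apply Rmult_lt_compat_r with (r := A + 2) in Hu2; [|lra].
    replace (e / (A + 2) * (A + 2)) with e in Hu2 by (field; lra). lra. }
  assert (0 <= Cmod (u - w)) by apply Cmod_ge_0.
  nra.
Qed.

Lemma CD_const c w : CD (fun _ => c) w 0.
Proof.
  exists (fun _ => RtoC 0), 1. split. lra. split. auto. split. apply Ccont_const.
  intros. ring.
Qed.

Lemma CD_id w : CD (fun u => u) w 1.
Proof.
  exists (fun _ => RtoC 1), 1. split. lra. split. auto. split. apply Ccont_const.
  intros. ring.
Qed.

Lemma CD_add F G w LF LG : CD F w LF -> CD G w LG -> CD (fun u => F u + G u)%C w (LF + LG)%C.
Proof.
  intros [q1 [d1 [Hd1 [Hq1 [Hc1 H1]]]]] [q2 [d2 [Hd2 [Hq2 [Hc2 H2]]]]].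
  exists (fun u => q1 u + q2 u)%C, (Rmin d1 d2). split. apply Rmin_pos; lra.
  split. rewrite Hq1, Hq2. auto. split. apply Ccont_add; auto.
  intros u Hu. rewrite (H1 u (Rlt_le_trans _ _ _ Hu (Rmin_l _ _))).
  rewrite (H2 u (Rlt_le_trans _ _ _ Hu (Rmin_r _ _))). ring.
Qed.

Lemma CD_scal c F w L : CD F w L -> CD (fun u => c * F u)%C w (c * L)%C.
Proof.
  intros [q1 [d1 [Hd1 [Hq1 [Hc1 H1]]]]].
  exists (fun u => c * q1 u)%C, d1. split. auto.
  split. rewrite Hq1. auto. split. apply Ccont_mul; auto. apply Ccont_const.
  intros u Hu. rewrite (H1 u Hu). ring.
Qed.

Lemma CD_sub F G w LF LG : CD F w LF -> CD G w LG -> CD (fun u => F u - G u)%C w (LF - LG)%C.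
Proof.
  intros HF HG. pose proof (CD_add F (fun u => (-1) * G u)%C w LF ((-1) * LG)%C HF (CD_scal (-1) G w LG HG)).
  destruct H as [q [d [Hd [Hq [Hc H]]]]]. exists q, d. repeat split; auto.
  rewrite Hq. ring. intros u Hu. specialize (H u Hu). cbv beta in H.
  transitivity (F u + -1 * G u)%C. ring. rewrite H. ring.
Qed.

Lemma CD_mul F G w LF LG : CD F w LF -> CD G w LG ->
  CD (fun u => F u * G u)%C w (LF * G w + F w * LG)%C.
Proof.
  intros HF HG. pose proof (CD_cont F w LF HF) as HFc.
  destruct HF as [q1 [d1 [Hd1 [Hq1 [Hc1 H1]]]]]. destruct HG as [q2 [d2 [Hd2 [Hq2 [Hc2 H2]]]]].
  exists (fun u => q1 u * G w + F u * q2 u)%C, (Rmin d1 d2). split. apply Rmin_pos; lra.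
  split. rewrite Hq1, Hq2. auto. split.
  apply Ccont_add. apply Ccont_mul; auto. apply Ccont_const. apply Ccont_mul; auto.
  intros u Hu. pose proof (H1 u (Rlt_le_trans _ _ _ Hu (Rmin_l _ _))) as E1.
  rewrite (H2 u (Rlt_le_trans _ _ _ Hu (Rmin_r _ _))).
  replace (F w * G w + (q1 u * G w + F u * q2 u) * (u - w))%C
    with ((F w + q1 u * (u - w)) * G w + F u * q2 u * (u - w))%C by ring.
  rewrite <- E1. ring.
Qed.

Lemma CD_inv G w LG : CD G w LG -> G w <> RtoC 0 ->
  CD (fun u => / G u)%C w (- LG / (G w * G w))%C.
Proof.
  intros HG Hn. pose proof (CD_cont G w LG HG) as HGc.
  destruct HG as [q [d [Hd [Hq [Hc H]]]]].
  assert (HB : 0 < Cmod (G w)) by (apply Cmod_gt_0; auto).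
  destruct (HGc (Cmod (G w)) HB) as [d2 [Hd2 H2]].
  exists (fun u => - q u / (G u * G w))%C, (Rmin d d2). split. apply Rmin_pos; lra.
  split. rewrite Hq. auto. split.
  { unfold Cdiv. apply Ccont_mul. apply Ccont_opp; auto.
    apply Ccont_inv. apply Ccont_mul; auto. apply Ccont_const.
    intro E. apply (f_equal Cmod) in E. rewrite Cmod_mult, Cmod_0 in E. nra. }
  intros u Hu. specialize (H2 u (Rlt_le_trans _ _ _ Hu (Rmin_r _ _))).
  assert (Gu : G u <> RtoC 0).
  { intro E. rewrite E in H2. replace (0 - G w)%C with (- G w)%C in H2 by ring.
    rewrite Cmod_opp in H2. lra. }
  pose proof (H u (Rlt_le_trans _ _ _ Hu (Rmin_l _ _))) as E.
  assert (Eq : (q u * (u - w))%C = (G u - G w)%C) by (rewrite E; ring).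
  replace (- q u / (G u * G w) * (u - w))%C with (- (G u - G w) / (G u * G w))%C.
  field. split; auto. rewrite <- Eq. field. split; auto.
Qed.

Lemma CD_ext F G w L d : 0 < d -> (forall u, Cmod (u - w) < d -> F u = G u) -> CD F w L -> CD G w L.
Proof.
  intros Hd HE [q [d1 [Hd1 [Hq [Hc H]]]]].
  exists q, (Rmin d d1). split. apply Rmin_pos; lra. split. auto. split. auto.
  intros u Hu. rewrite <- (HE u (Rlt_le_trans _ _ _ Hu (Rmin_l _ _))).
  rewrite <- (HE w). apply H. exact (Rlt_le_trans _ _ _ Hu (Rmin_r _ _)).
  replace (w - w)%C with (RtoC 0) by ring. rewrite Cmod_0. auto.
Qed.

Lemma CD_unique F w L1 L2 : CD F w L1 -> CD F w L2 -> L1 = L2.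
Proof.
  intros H1 H2.
  destruct (Req_dec (Cmod (L1 - L2)) 0) as [E|NE].
  { apply Cmod_eq_0 in E. replace L1 with ((L1 - L2) + L2)%C by ring. rewrite E. ring. }
  exfalso. set (m := Cmod (L1 - L2)).
  assert (Hm : 0 < m) by (destruct (Cmod_ge_0 (L1 - L2)) as [h|h]; [exact h|exfalso; apply NE; symmetry; exact h]).
  destruct (CD_eps F w L1 H1 (m/4)) as [d1 [Hd1 E1]]. lra.
  destruct (CD_eps F w L2 H2 (m/4)) as [d2 [Hd2 E2]]. lra.
  set (t := Rmin d1 d2 / 2).
  assert (Ht : 0 < t) by (unfold t; apply Rdiv_lt_0_compat; [apply Rmin_pos|]; lra).
  set (u := (w + RtoC t)%C).
  assert (Hu : Cmod (u - w) = t).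
  { unfold u. replace (w + RtoC t - w)%C with (RtoC t) by ring. rewrite Cmod_R. apply Rabs_pos_eq. lra. }
  assert (t < d1). { unfold t. pose proof (Rmin_l d1 d2). pose proof (Rmin_pos d1 d2 Hd1 Hd2). lra. }
  assert (t < d2). { unfold t. pose proof (Rmin_r d1 d2). pose proof (Rmin_pos d1 d2 Hd1 Hd2). lra. }
  specialize (E1 u ltac:(lra)). specialize (E2 u ltac:(lra)). rewrite Hu in E1, E2.
  assert (HK : Cmod ((L1 - L2) * (u - w)) <= m/4 * t + m/4 * t).
  { replace ((L1 - L2) * (u - w))%C with ((F u - F w - L2 * (u - w)) - (F u - F w - L1 * (u - w)))%C by ring.
    eapply Rle_trans. apply Cmod_tri_sub with (b := RtoC 0).
    replace (F u - F w - L2 * (u - w) - 0)%C with (F u - F w - L2 * (u - w))%C by ring.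
    replace (0 - (F u - F w - L1 * (u - w)))%C with (- (F u - F w - L1 * (u - w)))%C by ring.
    rewrite Cmod_opp. lra. }
  rewrite Cmod_mult, Hu in HK. fold m in HK. nra.
Qed.

Lemma isd_CD (F : C -> C) (w L : C) : @is_derive C_AbsRing C_NormedModule F w L -> CD F w L.
Proof.
  intros [_ Hd]. specialize (Hd w (fun P HP => HP)).
  exists (fun u => match excluded_middle_informative (u = w) with
                   | left _ => L | right _ => ((F u - F w) / (u - w))%C end), 1.
  split. lra. split. destruct (excluded_middle_informative (w = w)); congruence.
  split.
  - intros e He. destruct (Hd (mkposreal (e/2) ltac:(lra))) as [d Hdd].
    exists d. split. apply cond_pos. intros u Hu.
    match goal with |- context [excluded_middle_informative (w = w)] =>
      destruct (excluded_middle_informative (w = w)) as [_|h]; [|congruence] end.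
    match goal with |- context [excluded_middle_informative ?P] =>
      destruct (excluded_middle_informative P) as [E|NE] end.
    { replace (L - L)%C with (RtoC 0) by ring. rewrite Cmod_0. lra. }
    specialize (Hdd u ltac:(change (@AbsRing_ball C_AbsRing w d u); unfold AbsRing_ball; exact Hu)).
    simpl in Hdd.
    change (Cmod ((F u - F w) - (u - w) * L) <= e / 2 * Cmod (u - w)) in Hdd.
    assert (Huw : (u - w)%C <> RtoC 0).
    { intro E. apply NE. replace u with ((u - w) + w)%C by ring. rewrite E. ring. }
    replace ((F u - F w) / (u - w) - L)%C with (((F u - F w) - (u - w) * L) / (u - w))%C
      by (field; auto).
    rewrite Cmod_div by auto.
    assert (0 < Cmod (u - w)) by (apply Cmod_gt_0; auto).
    apply Rle_lt_trans with (e / 2). 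
    apply Rmult_le_reg_r with (Cmod (u - w)). auto. unfold Rdiv at 1.
    rewrite Rmult_assoc, Rinv_l by lra. lra. lra.
  - intros u _. destruct (excluded_middle_informative (u = w)) as [E|NE].
    + subst. ring.
    + assert (Huw : (u - w)%C <> RtoC 0).
      { intro E. apply NE. replace u with ((u - w) + w)%C by ring. rewrite E. ring. }
      field. auto.
Qed.


Lemma RI_plus (f g : R -> R) a b : ex_RInt f a b -> ex_RInt g a b ->
  RInt (fun x => f x + g x) a b = RInt f a b + RInt g a b.
Proof. intros. exact (RInt_plus f g a b H H0). Qed.
Lemma RI_minus (f g : R -> R) a b : ex_RInt f a b -> ex_RInt g a b ->
  RInt (fun x => f x - g x) a b = RInt f a b - RInt g a b.
Proof. intros. exact (RInt_minus f g a b H H0). Qed.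
Lemma RI_scal (f : R -> R) a b k : ex_RInt f a b ->
  RInt (fun x => k * f x) a b = k * RInt f a b.
Proof. intros. exact (RInt_scal f a b k H). Qed.
Lemma exRI_plus (f g : R -> R) a b : ex_RInt f a b -> ex_RInt g a b -> ex_RInt (fun x => f x + g x) a b.
Proof. intros. exact (ex_RInt_plus f g a b H H0). Qed.
Lemma exRI_minus (f g : R -> R) a b : ex_RInt f a b -> ex_RInt g a b -> ex_RInt (fun x => f x - g x) a b.
Proof. intros. exact (ex_RInt_minus f g a b H H0). Qed.
Lemma exRI_scal (f : R -> R) a b k : ex_RInt f a b -> ex_RInt (fun x => k * f x) a b.
Proof. intros. exact (ex_RInt_scal f a b k H). Qed.
Lemma RI_chasles (f : R -> R) a b c : ex_RInt f a b -> ex_RInt f b c ->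
  RInt f a b + RInt f b c = RInt f a c.
Proof. intros. exact (RInt_Chasles f a b c H H0). Qed.

Lemma exRI_cont (f : R -> R) a b : (forall z, Rmin a b <= z <= Rmax a b -> continuous f z) -> ex_RInt f a b.
Proof. intros. exact (@ex_RInt_continuous R_CompleteNormedModule f a b H). Qed.

Definition CI (h : R -> C) (a b : R) : C :=
  (RInt (fun t => fst (h t)) a b, RInt (fun t => snd (h t)) a b).

Definition exC (h : R -> C) a b := ex_RInt (fun t => fst (h t)) a b /\ ex_RInt (fun t => snd (h t)) a b.

Definition ph (y t : R) : C := (t, y).
Definition pv (x t : R) : C := (x, t).

Lemma ph_diff y u t : (ph y u - ph y t)%C = (RtoC (u - t) * 1)%C.
Proof. unfold ph, RtoC. apply injective_projections; simpl; ring. Qed.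
Lemma pv_diff x u t : (pv x u - pv x t)%C = (RtoC (u - t) * Ci)%C.
Proof. unfold pv, RtoC, Ci. apply injective_projections; simpl; ring. Qed.

Lemma fst_le_Cmod (z : C) : Rabs (fst z) <= Cmod z.
Proof. pose proof (Rmax_Cmod z). pose proof (Rmax_l (Rabs (fst z)) (Rabs (snd z))). lra. Qed.
Lemma snd_le_Cmod (z : C) : Rabs (snd z) <= Cmod z.
Proof. pose proof (Rmax_Cmod z). pose proof (Rmax_r (Rabs (fst z)) (Rabs (snd z))). lra. Qed.
Lemma Cmod_le_sum (z : C) : Cmod z <= Rabs (fst z) + Rabs (snd z).
Proof.
  destruct z as [x y]. unfold Cmod. simpl.
  pose proof (Rabs_pos x); pose proof (Rabs_pos y).
  rewrite <- (sqrt_square (Rabs x + Rabs y)) by lra.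
  apply sqrt_le_1_alt.
  assert (x * x = Rabs x * Rabs x) by (rewrite <- Rabs_mult; rewrite Rabs_pos_eq; nra).
  assert (y * y = Rabs y * Rabs y) by (rewrite <- Rabs_mult; rewrite Rabs_pos_eq; nra).
  nra.
Qed.

Lemma Cmod_Ci_mul (z : C) : Cmod (z * Ci) = Cmod z.
Proof. rewrite Cmod_mult, Cmod_Ci. ring. Qed.
Lemma Cmod_1_mul (z : C) : Cmod (z * 1) = Cmod z.
Proof. rewrite Cmod_mult, Cmod_1. ring. Qed.

Lemma fst_mul_diff (A B d : C) : Cmod d = 1 -> Rabs (fst (A * d)%C - fst (B * d)%C) <= Cmod (A - B).
Proof.
  intros Hd. replace (fst (A * d)%C - fst (B * d)%C) with (fst ((A - B) * d)%C) by (simpl; ring).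
  eapply Rle_trans. apply fst_le_Cmod. rewrite Cmod_mult, Hd. lra.
Qed.
Lemma snd_mul_diff (A B d : C) : Cmod d = 1 -> Rabs (snd (A * d)%C - snd (B * d)%C) <= Cmod (A - B).
Proof.
  intros Hd. replace (snd (A * d)%C - snd (B * d)%C) with (snd ((A - B) * d)%C) by (simpl; ring).
  eapply Rle_trans. apply snd_le_Cmod. rewrite Cmod_mult, Hd. lra.
Qed.

Lemma path_cont (f : C -> C) (p : R -> C) (d : C) t :
  (forall u, (p u - p t)%C = (RtoC (u - t) * d)%C) -> Cmod d = 1 ->
  Ccont f (p t) ->
  continuous (fun u => fst (f (p u) * d)%C) t /\ continuous (fun u => snd (f (p u) * d)%C) t.
Proof.
  intros Hp Hd Hc. split; apply continuity_pt_filterlim; intros e He;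
  destruct (Hc e He) as [dl [Hdl H]]; exists dl; split; auto;
  intros u [_ Hu]; simpl in *; unfold R_dist in *;
  (assert (Hu' : Cmod (p u - p t) < dl) by (rewrite Hp, Cmod_mult, Cmod_R, Hd; lra));
  specialize (H (p u) Hu'); eapply Rle_lt_trans; try exact H.
  apply fst_mul_diff; auto. apply snd_mul_diff; auto.
Qed.

Definition pathd (p : R -> C) (d : C) := (forall u t, (p u - p t)%C = (RtoC (u - t) * d)%C) /\ Cmod d = 1.

Lemma ph_path y : pathd (ph y) 1.
Proof. split. intros. apply ph_diff. apply Cmod_1. Qed.
Lemma pv_path x : pathd (pv x) Ci.
Proof. split. intros. apply pv_diff. apply Cmod_Ci. Qed.

Lemma exC_path f p d a b : pathd p d ->
  (forall t, Rmin a b <= t <= Rmax a b -> Ccont f (p t)) ->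
  exC (fun t => f (p t) * d)%C a b.
Proof.
  intros [Hp Hd] Hc. split; apply exRI_cont; intros z Hz;
  destruct (path_cont f p d z (fun u => Hp u z) Hd (Hc z Hz)); auto.
Qed.

Lemma CI_chasles h a b c : exC h a b -> exC h b c -> (CI h a b + CI h b c)%C = CI h a c.
Proof.
  intros [H1 H2] [H3 H4]. unfold CI. apply injective_projections; simpl;
  apply RI_chasles; auto.
Qed.

Lemma CI_ext h1 h2 a b : (forall t, Rmin a b <= t <= Rmax a b -> h1 t = h2 t) -> CI h1 a b = CI h2 a b.
Proof.
  intros H. unfold CI. f_equal; apply RInt_ext; intros x Hx; rewrite H; auto; lra.
Qed.

Lemma CI_add h1 h2 a b : exC h1 a b -> exC h2 a b -> CI (fun t => h1 t + h2 t)%C a b = (CI h1 a b + CI h2 a b)%C.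
Proof.
  intros [H1 H2] [H3 H4]. unfold CI. apply injective_projections; simpl.
  apply (RI_plus (fun t => fst (h1 t)) (fun t => fst (h2 t))); auto.
  apply (RI_plus (fun t => snd (h1 t)) (fun t => snd (h2 t))); auto.
Qed.

Lemma exC_add h1 h2 a b : exC h1 a b -> exC h2 a b -> exC (fun t => h1 t + h2 t)%C a b.
Proof.
  intros [H1 H2] [H3 H4]. split; simpl.
  apply (exRI_plus (fun t => fst (h1 t)) (fun t => fst (h2 t))); auto.
  apply (exRI_plus (fun t => snd (h1 t)) (fun t => snd (h2 t))); auto.
Qed.

Lemma CI_scal c h a b : exC h a b -> CI (fun t => c * h t)%C a b = (c * CI h a b)%C.
Proof.
  intros [H1 H2]. unfold CI. destruct c as [c1 c2]. apply injective_projections; simpl.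
  - rewrite (RI_minus (fun t => c1 * fst (h t)) (fun t => c2 * snd (h t))).
    rewrite (RI_scal (fun t => fst (h t))), (RI_scal (fun t => snd (h t))); auto.
    apply exRI_scal; auto. apply exRI_scal; auto.
  - rewrite (RI_plus (fun t => c1 * snd (h t)) (fun t => c2 * fst (h t))).
    rewrite (RI_scal (fun t => fst (h t))), (RI_scal (fun t => snd (h t))); auto.
    apply exRI_scal; auto. apply exRI_scal; auto.
Qed.

Lemma exC_scal c h a b : exC h a b -> exC (fun t => c * h t)%C a b.
Proof.
  intros [H1 H2]. destruct c as [c1 c2]. split; simpl.
  apply (exRI_minus (fun t => c1 * fst (h t)) (fun t => c2 * snd (h t))); apply exRI_scal; auto.
  apply (exRI_plus (fun t => c1 * snd (h t)) (fun t => c2 * fst (h t))); apply exRI_scal; auto.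
Qed.

Lemma CI_bound h a b M : a <= b -> exC h a b -> (forall t, a <= t <= b -> Cmod (h t) <= M) ->
  Cmod (CI h a b) <= 2 * (b - a) * M.
Proof.
  intros Hab [H1 H2] HM. eapply Rle_trans. apply Cmod_le_sum. unfold CI; simpl.
  assert (Rabs (RInt (fun t => fst (h t)) a b) <= (b - a) * M).
  { apply abs_RInt_le_const; auto. intros t Ht. eapply Rle_trans. apply fst_le_Cmod. auto. }
  assert (Rabs (RInt (fun t => snd (h t)) a b) <= (b - a) * M).
  { apply abs_RInt_le_const; auto. intros t Ht. eapply Rle_trans. apply snd_le_Cmod. auto. }
  lra.
Qed.

Lemma chain_fst P p d t L : pathd p d -> CD P (p t) L ->
  is_derive (fun u => fst (P (p u))) t (fst (L * d)%C).
Proof.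
  intros [Hp Hd] HD. apply is_derive_Reals. intros e He.
  destruct (CD_eps P (p t) L HD (e/2)) as [dl [Hdl H]]. lra.
  exists (mkposreal dl Hdl). intros h Hh Hhd. simpl in Hhd.
  assert (Hm : Cmod (p (t + h) - p t) = Rabs h).
  { rewrite Hp, Cmod_mult, Cmod_R, Hd. replace (t + h - t) with h by ring. ring. }
  specialize (H (p (t+h)) ltac:(rewrite Hm; auto)). rewrite Hm in H.
  assert (Habs : 0 < Rabs h) by (apply Rabs_pos_lt; auto).
  assert (E : (fst (P (p (t + h))) - fst (P (p t))) / h - fst (L * d)%C
             = fst (P (p (t + h)%R) - P (p t) - L * (p (t + h)%R - p t))%C / h).
  { rewrite Hp. replace (t + h - t) with h by ring. simpl. field. auto. }
  rewrite E. unfold Rdiv. rewrite Rabs_mult, Rabs_inv.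
  apply Rle_lt_trans with (e / 2 * Rabs h * / Rabs h).
  apply Rmult_le_compat_r. left. apply Rinv_0_lt_compat. auto.
  eapply Rle_trans. apply fst_le_Cmod. auto.
  rewrite Rmult_assoc, Rinv_r by lra. lra.
Qed.

Lemma chain_snd P p d t L : pathd p d -> CD P (p t) L ->
  is_derive (fun u => snd (P (p u))) t (snd (L * d)%C).
Proof.
  intros [Hp Hd] HD. apply is_derive_Reals. intros e He.
  destruct (CD_eps P (p t) L HD (e/2)) as [dl [Hdl H]]. lra.
  exists (mkposreal dl Hdl). intros h Hh Hhd. simpl in Hhd.
  assert (Hm : Cmod (p (t + h) - p t) = Rabs h).
  { rewrite Hp, Cmod_mult, Cmod_R, Hd. replace (t + h - t) with h by ring. ring. }
  specialize (H (p (t+h)) ltac:(rewrite Hm; auto)). rewrite Hm in H.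
  assert (Habs : 0 < Rabs h) by (apply Rabs_pos_lt; auto).
  assert (E : (snd (P (p (t + h))) - snd (P (p t))) / h - snd (L * d)%C
             = snd (P (p (t + h)%R) - P (p t) - L * (p (t + h)%R - p t))%C / h).
  { rewrite Hp. replace (t + h - t) with h by ring. simpl. field. auto. }
  rewrite E. unfold Rdiv. rewrite Rabs_mult, Rabs_inv.
  apply Rle_lt_trans with (e / 2 * Rabs h * / Rabs h).
  apply Rmult_le_compat_r. left. apply Rinv_0_lt_compat. auto.
  eapply Rle_trans. apply snd_le_Cmod. auto.
  rewrite Rmult_assoc, Rinv_r by lra. lra.
Qed.

Lemma CI_FTC P f p d a b : pathd p d ->
  (forall t, Rmin a b <= t <= Rmax a b -> CD P (p t) (f (p t)) /\ Ccont f (p t)) ->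
  CI (fun t => f (p t) * d)%C a b = (P (p b) - P (p a))%C.
Proof.
  intros Hpd H. pose proof Hpd as [Hp Hd]. unfold CI. apply injective_projections; simpl.
  - apply is_RInt_unique.
    apply (is_RInt_derive (fun u => fst (P (p u))) (fun t => fst (f (p t) * d)%C)).
    intros x Hx. apply chain_fst; auto. apply H; auto.
    intros x Hx. destruct (path_cont f p d x (fun u => Hp u x) Hd (proj2 (H x Hx))); auto.
  - apply is_RInt_unique.
    apply (is_RInt_derive (fun u => snd (P (p u))) (fun t => snd (f (p t) * d)%C)).
    intros x Hx. apply chain_snd; auto. apply H; auto.
    intros x Hx. destruct (path_cont f p d x (fun u => Hp u x) Hd (proj2 (H x Hx))); auto.
Qed.


Definition Rect (f : C -> C) x1 x2 y1 y2 : C :=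
  (CI (fun t => f (ph y1 t) * 1) x1 x2 + CI (fun t => f (pv x2 t) * Ci) y1 y2
   - CI (fun t => f (ph y2 t) * 1) x1 x2 - CI (fun t => f (pv x1 t) * Ci) y1 y2)%C.

Definition OnB (P : C -> Prop) x1 x2 y1 y2 : Prop :=
  (forall t, x1 <= t <= x2 -> P (ph y1 t) /\ P (ph y2 t)) /\
  (forall t, y1 <= t <= y2 -> P (pv x1 t) /\ P (pv x2 t)).

Lemma OnB_impl (P Q : C -> Prop) x1 x2 y1 y2 : (forall w, P w -> Q w) -> OnB P x1 x2 y1 y2 -> OnB Q x1 x2 y1 y2.
Proof. intros H [H1 H2]. split; intros t Ht; split; apply H; [apply (H1 t Ht)|apply (H1 t Ht)|apply (H2 t Ht)|apply (H2 t Ht)]. Qed.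

Lemma OnB_and (P Q : C -> Prop) x1 x2 y1 y2 : OnB P x1 x2 y1 y2 -> OnB Q x1 x2 y1 y2 -> OnB (fun w => P w /\ Q w) x1 x2 y1 y2.
Proof. intros [H1 H2] [H3 H4]. split; intros t Ht; repeat split;
  try apply (H1 t Ht); try apply (H2 t Ht); try apply (H3 t Ht); try apply (H4 t Ht). Qed.

Lemma exC_seg f p d a b : a <= b -> pathd p d -> (forall t, a <= t <= b -> Ccont f (p t)) ->
  exC (fun t => f (p t) * d)%C a b.
Proof.
  intros Hab Hp H. apply exC_path; auto. intros t Ht.
  rewrite Rmin_left, Rmax_right in Ht by lra. auto.
Qed.

Lemma CI_ext_seg h1 h2 a b : a <= b -> (forall t, a <= t <= b -> h1 t = h2 t) -> CI h1 a b = CI h2 a b.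
Proof. intros Hab H. apply CI_ext. intros t Ht. rewrite Rmin_left, Rmax_right in Ht by lra. auto. Qed.

Lemma Rect_ext f g x1 x2 y1 y2 : x1 <= x2 -> y1 <= y2 ->
  OnB (fun w => f w = g w) x1 x2 y1 y2 -> Rect f x1 x2 y1 y2 = Rect g x1 x2 y1 y2.
Proof.
  intros Hx Hy [H1 H2]. unfold Rect.
  rewrite (CI_ext_seg (fun t => f (ph y1 t) * 1)%C (fun t => g (ph y1 t) * 1)%C x1 x2) by (auto; intros t Ht; rewrite (proj1 (H1 t Ht)); auto).
  rewrite (CI_ext_seg (fun t => f (ph y2 t) * 1)%C (fun t => g (ph y2 t) * 1)%C x1 x2) by (auto; intros t Ht; rewrite (proj2 (H1 t Ht)); auto).
  rewrite (CI_ext_seg (fun t => f (pv x1 t) * Ci)%C (fun t => g (pv x1 t) * Ci)%C y1 y2) by (auto; intros t Ht; rewrite (proj1 (H2 t Ht)); auto).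
  rewrite (CI_ext_seg (fun t => f (pv x2 t) * Ci)%C (fun t => g (pv x2 t) * Ci)%C y1 y2) by (auto; intros t Ht; rewrite (proj2 (H2 t Ht)); auto).
  auto.
Qed.

Lemma CI_add_seg f g p d a b : a <= b -> pathd p d ->
  (forall t, a <= t <= b -> Ccont f (p t)) -> (forall t, a <= t <= b -> Ccont g (p t)) ->
  CI (fun t => (f (p t) + g (p t)) * d)%C a b = (CI (fun t => f (p t) * d) a b + CI (fun t => g (p t) * d) a b)%C.
Proof.
  intros Hab Hp Hf Hg.
  rewrite (CI_ext_seg _ (fun t => f (p t) * d + g (p t) * d)%C) by (auto; intros; ring).
  apply CI_add; apply exC_seg; auto.
Qed.

Lemma CI_scal_seg c f p d a b : a <= b -> pathd p d ->
  (forall t, a <= t <= b -> Ccont f (p t)) ->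
  CI (fun t => (c * f (p t)) * d)%C a b = (c * CI (fun t => f (p t) * d) a b)%C.
Proof.
  intros Hab Hp Hf.
  rewrite (CI_ext_seg _ (fun t => c * (f (p t) * d))%C) by (auto; intros; ring).
  apply CI_scal; apply exC_seg; auto.
Qed.

Lemma Rect_add f g x1 x2 y1 y2 : x1 <= x2 -> y1 <= y2 ->
  OnB (Ccont f) x1 x2 y1 y2 -> OnB (Ccont g) x1 x2 y1 y2 ->
  Rect (fun w => f w + g w)%C x1 x2 y1 y2 = (Rect f x1 x2 y1 y2 + Rect g x1 x2 y1 y2)%C.
Proof.
  intros Hx Hy [F1 F2] [G1 G2]. unfold Rect.
  rewrite (CI_add_seg f g (ph y1) 1), (CI_add_seg f g (ph y2) 1),
    (CI_add_seg f g (pv x1) Ci), (CI_add_seg f g (pv x2) Ci); auto;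
  try apply ph_path; try apply pv_path; try (intros t Ht; apply (F1 t Ht)); try (intros t Ht; apply (F2 t Ht));
   try (intros t Ht; apply (G1 t Ht)); try (intros t Ht; apply (G2 t Ht)).
  ring.
Qed.

Lemma Rect_scal c f x1 x2 y1 y2 : x1 <= x2 -> y1 <= y2 ->
  OnB (Ccont f) x1 x2 y1 y2 ->
  Rect (fun w => c * f w)%C x1 x2 y1 y2 = (c * Rect f x1 x2 y1 y2)%C.
Proof.
  intros Hx Hy [F1 F2]. unfold Rect.
  rewrite (CI_scal_seg c f (ph y1) 1), (CI_scal_seg c f (ph y2) 1),
    (CI_scal_seg c f (pv x1) Ci), (CI_scal_seg c f (pv x2) Ci); auto;
  try apply ph_path; try apply pv_path; try (intros t Ht; apply (F1 t Ht)); try (intros t Ht; apply (F2 t Ht)).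
  ring.
Qed.

Lemma Rect_bound f M x1 x2 y1 y2 : x1 <= x2 -> y1 <= y2 ->
  OnB (Ccont f) x1 x2 y1 y2 -> OnB (fun w => Cmod (f w) <= M) x1 x2 y1 y2 ->
  Cmod (Rect f x1 x2 y1 y2) <= 4 * ((x2 - x1) + (y2 - y1)) * M.
Proof.
  intros Hx Hy [F1 F2] [M1 M2]. unfold Rect.
  assert (B1 : Cmod (CI (fun t => f (ph y1 t) * 1)%C x1 x2) <= 2 * (x2 - x1) * M).
  { apply CI_bound; auto. apply exC_seg; auto. apply ph_path. intros t Ht; apply (F1 t Ht).
    intros t Ht. rewrite Cmod_1_mul. apply (M1 t Ht). }
  assert (B2 : Cmod (CI (fun t => f (ph y2 t) * 1)%C x1 x2) <= 2 * (x2 - x1) * M).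
  { apply CI_bound; auto. apply exC_seg; auto. apply ph_path. intros t Ht; apply (F1 t Ht).
    intros t Ht. rewrite Cmod_1_mul. apply (M1 t Ht). }
  assert (B3 : Cmod (CI (fun t => f (pv x1 t) * Ci)%C y1 y2) <= 2 * (y2 - y1) * M).
  { apply CI_bound; auto. apply exC_seg; auto. apply pv_path. intros t Ht; apply (F2 t Ht).
    intros t Ht. rewrite Cmod_Ci_mul. apply (M2 t Ht). }
  assert (B4 : Cmod (CI (fun t => f (pv x2 t) * Ci)%C y1 y2) <= 2 * (y2 - y1) * M).
  { apply CI_bound; auto. apply exC_seg; auto. apply pv_path. intros t Ht; apply (F2 t Ht).
    intros t Ht. rewrite Cmod_Ci_mul. apply (M2 t Ht). }
  set (A := CI (fun t => f (ph y1 t) * 1)%C x1 x2) in *.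
  set (B := CI (fun t => f (pv x2 t) * Ci)%C y1 y2) in *.
  set (Cc := CI (fun t => f (ph y2 t) * 1)%C x1 x2) in *.
  set (D := CI (fun t => f (pv x1 t) * Ci)%C y1 y2) in *.
  replace (A + B - Cc - D)%C with (A + B + (- Cc) + (- D))%C by ring.
  eapply Rle_trans. apply Cmod_triangle. rewrite Cmod_opp.
  eapply Rle_trans. apply Rplus_le_compat_r. apply Cmod_triangle. rewrite Cmod_opp.
  eapply Rle_trans. apply Rplus_le_compat_r. apply Rplus_le_compat_r. apply Cmod_triangle.
  lra.
Qed.

Lemma Rect_FTC P f x1 x2 y1 y2 : x1 <= x2 -> y1 <= y2 ->
  OnB (fun w => CD P w (f w) /\ Ccont f w) x1 x2 y1 y2 -> Rect f x1 x2 y1 y2 = RtoC 0.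
Proof.
  intros Hx Hy [H1 H2]. unfold Rect.
  rewrite (CI_FTC P f (ph y1) 1 x1 x2), (CI_FTC P f (ph y2) 1 x1 x2),
    (CI_FTC P f (pv x1) Ci y1 y2), (CI_FTC P f (pv x2) Ci y1 y2);
  try apply ph_path; try apply pv_path;
  try (intros t Ht; rewrite Rmin_left, Rmax_right in Ht by lra; first [apply (H1 t Ht)|apply (H2 t Ht)]).
  unfold ph, pv. ring.
Qed.

Lemma Rect_vsplit f x1 xm x2 y1 y2 : x1 <= xm <= x2 -> y1 <= y2 ->
  OnB (Ccont f) x1 x2 y1 y2 -> (forall t, y1 <= t <= y2 -> Ccont f (pv xm t)) ->
  Rect f x1 x2 y1 y2 = (Rect f x1 xm y1 y2 + Rect f xm x2 y1 y2)%C.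
Proof.
  intros Hx Hy [F1 F2] Fm. unfold Rect.
  rewrite <- (CI_chasles (fun t => f (ph y1 t) * 1)%C x1 xm x2).
  rewrite <- (CI_chasles (fun t => f (ph y2 t) * 1)%C x1 xm x2).
  ring.
  all: apply exC_seg; try lra; try apply ph_path; intros t Ht; apply F1; lra.
Qed.

Lemma Rect_hsplit f x1 x2 y1 ym y2 : x1 <= x2 -> y1 <= ym <= y2 ->
  OnB (Ccont f) x1 x2 y1 y2 -> (forall t, x1 <= t <= x2 -> Ccont f (ph ym t)) ->
  Rect f x1 x2 y1 y2 = (Rect f x1 x2 y1 ym + Rect f x1 x2 ym y2)%C.
Proof.
  intros Hx Hy [F1 F2] Fm. unfold Rect.
  rewrite <- (CI_chasles (fun t => f (pv x1 t) * Ci)%C y1 ym y2).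
  rewrite <- (CI_chasles (fun t => f (pv x2 t) * Ci)%C y1 ym y2).
  ring.
  all: apply exC_seg; try lra; try apply pv_path; intros t Ht; apply F2; lra.
Qed.


Definition InR x1 x2 y1 y2 (w : C) := x1 <= fst w <= x2 /\ y1 <= snd w <= y2.

Lemma OnB_InR (P : C -> Prop) x1 x2 y1 y2 : (forall w, InR x1 x2 y1 y2 w -> P w) ->
  x1 <= x2 -> y1 <= y2 -> OnB P x1 x2 y1 y2.
Proof.
  intros H Hx Hy. split; intros t Ht; split; apply H; unfold InR, ph, pv; simpl; lra.
Qed.

Lemma quadrisect f a b w h : 0 <= w -> 0 <= h ->
  (forall z, InR a (a + w) b (b + h) z -> Ccont f z) ->
  Rect f a (a + w) b (b + h) =
  (Rect f a (a + w/2) b (b + h/2) + Rect f (a + w/2) (a + w/2 + w/2) b (b + h/2)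
   + Rect f a (a + w/2) (b + h/2) (b + h/2 + h/2) + Rect f (a + w/2) (a + w/2 + w/2) (b + h/2) (b + h/2 + h/2))%C.
Proof.
  intros Hw Hh Hc.
  replace (a + w/2 + w/2) with (a + w) by field. replace (b + h/2 + h/2) with (b + h) by field.
  rewrite (Rect_vsplit f a (a + w/2) (a + w)); try lra.
  rewrite (Rect_hsplit f a (a + w/2) b (b + h/2) (b+h)); try lra.
  rewrite (Rect_hsplit f (a + w/2) (a + w) b (b + h/2) (b+h)); try lra.
  ring.
  all: try (apply OnB_InR; [intros z Hz; apply Hc; unfold InR in *; lra|lra|lra]).
  all: intros t Ht; apply Hc; unfold InR, ph, pv; simpl; lra.
Qed.

Definition gstep (f : C -> C) (w h : R) (c : R * R) : R * R :=
  let a := fst c in let b := snd c in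
  let m := Cmod (Rect f a (a + w) b (b + h)) in
  if Rle_dec (m/4) (Cmod (Rect f a (a + w/2) b (b + h/2))) then (a, b)
  else if Rle_dec (m/4) (Cmod (Rect f (a + w/2) (a + w/2 + w/2) b (b + h/2))) then (a + w/2, b)
  else if Rle_dec (m/4) (Cmod (Rect f a (a + w/2) (b + h/2) (b + h/2 + h/2))) then (a, b + h/2)
  else (a + w/2, b + h/2).

Lemma gstep_prop f w h c : 0 <= w -> 0 <= h ->
  (forall z, InR (fst c) (fst c + w) (snd c) (snd c + h) z -> Ccont f z) ->
  let c' := gstep f w h c in
  Cmod (Rect f (fst c) (fst c + w) (snd c) (snd c + h)) / 4 <=
    Cmod (Rect f (fst c') (fst c' + w/2) (snd c') (snd c' + h/2)) /\
  (fst c' = fst c \/ fst c' = fst c + w/2) /\ (snd c' = snd c \/ snd c' = snd c + h/2).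
Proof.
  intros Hw Hh Hc c'. unfold c', gstep.
  destruct c as [a b]. simpl in *.
  pose proof (quadrisect f a b w h Hw Hh Hc) as Q.
  set (m := Cmod (Rect f a (a + w) b (b + h))).
  destruct (Rle_dec (m/4) (Cmod (Rect f a (a + w/2) b (b + h/2)))). simpl; split; auto; lra.
  destruct (Rle_dec (m/4) (Cmod (Rect f (a + w/2) (a + w/2 + w/2) b (b + h/2)))). simpl; split; auto; lra.
  destruct (Rle_dec (m/4) (Cmod (Rect f a (a + w/2) (b + h/2) (b + h/2 + h/2)))). simpl; split; auto; lra.
  simpl. split; [|split; right; auto].
  destruct (Rle_dec (m/4) (Cmod (Rect f (a + w/2) (a + w/2 + w/2) (b + h/2) (b + h/2 + h/2)))) as [r|n3]. auto.
  exfalso. unfold m in *. rewrite Q in *.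
  set (A := Rect f a (a + w/2) b (b + h/2)) in *.
  set (B := Rect f (a + w/2) (a + w/2 + w/2) b (b + h/2)) in *.
  set (Cc := Rect f a (a + w/2) (b + h/2) (b + h/2 + h/2)) in *.
  set (D := Rect f (a + w/2) (a + w/2 + w/2) (b + h/2) (b + h/2 + h/2)) in *.
  pose proof (Cmod_triangle (A + B + Cc) D). pose proof (Cmod_triangle (A + B) Cc).
  pose proof (Cmod_triangle A B). lra.
Qed.

Fixpoint gseq (f : C -> C) (w0 h0 : R) (c0 : R * R) (n : nat) : R * R :=
  match n with
  | O => c0
  | S k => gstep f (w0 / 2 ^ k) (h0 / 2 ^ k) (gseq f w0 h0 c0 k)
  end.

Lemma pow2_pos n : 0 < 2 ^ n.
Proof. apply pow_lt. lra. Qed.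

Lemma div_pow2_S x n : x / 2 ^ S n = x / 2 ^ n / 2.
Proof. simpl. field. pose proof (pow2_pos n). lra. Qed.

Lemma INR_le_pow2 n : INR n <= 2 ^ n.
Proof.
  assert (P1 : forall k, 1 <= 2 ^ k). { induction k. simpl; lra. simpl. lra. }
  induction n. simpl. lra. rewrite S_INR. replace (2 ^ S n) with (2 * 2 ^ n) by (simpl; ring).
  pose proof (P1 n). lra.
Qed.

Lemma incr_le (u : nat -> R) : (forall n, u n <= u (S n)) -> forall m n, (m <= n)%nat -> u m <= u n.
Proof. intros H m n Hmn. induction Hmn. lra. specialize (H m0). lra. Qed.

Lemma decr_le (u : nat -> R) : (forall n, u (S n) <= u n) -> forall m n, (m <= n)%nat -> u n <= u m.
Proof. intros H m n Hmn. induction Hmn. lra. specialize (H m0). lra. Qed.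

Lemma CD_eq F w L L' : CD F w L -> L = L' -> CD F w L'.
Proof. intros H E; subst; auto. Qed.

Lemma nested_lub (A W : nat -> R) : (forall n, A n <= A (S n)) -> (forall n, A (S n) + W (S n) <= A n + W n) ->
  (forall n, 0 <= W n) -> exists a, forall n, A n <= a <= A n + W n.
Proof.
  intros HA HB HW.
  assert (Hall : forall m n, A m <= A n + W n).
  { intros m n. destruct (Nat.le_ge_cases m n) as [h|h].
    - pose proof (incr_le A HA m n h). pose proof (HW n). lra.
    - pose proof (decr_le (fun k => A k + W k) HB n m h). simpl in H. pose proof (HW m). lra. }
  destruct (completeness (fun r => exists n, r = A n)) as [a [Hub Hl]].
  { exists (A 0%nat + W 0%nat). intros r [n ->]. apply Hall. }
  { exists (A 0%nat). exists 0%nat. auto. }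
  exists a. intros n. split. apply Hub. exists n; auto.
  apply Hl. intros r [m ->]. apply Hall.
Qed.

Theorem goursat f x1 x2 y1 y2 : x1 <= x2 -> y1 <= y2 ->
  (forall w, InR x1 x2 y1 y2 w -> exists L, CD f w L) -> Rect f x1 x2 y1 y2 = RtoC 0.
Proof.
  intros Hx Hy Hd.
  assert (Hc : forall z, InR x1 x2 y1 y2 z -> Ccont f z).
  { intros z Hz. destruct (Hd z Hz) as [L HL]. exact (CD_cont f z L HL). }
  set (w0 := x2 - x1). set (h0 := y2 - y1).
  set (s := gseq f w0 h0 (x1, y1)).
  set (W := fun n => w0 / 2 ^ n). set (H := fun n => h0 / 2 ^ n).
  set (c := Cmod (Rect f x1 x2 y1 y2)).
  assert (HW : forall n, 0 <= W n). { intros n. unfold W. pose proof (pow2_pos n). apply Rdiv_le_0_compat; unfold w0; lra. }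
  assert (HH : forall n, 0 <= H n). { intros n. unfold H. pose proof (pow2_pos n). apply Rdiv_le_0_compat; unfold h0; lra. }
  assert (WS : forall n, W (S n) = W n / 2). { intros. unfold W. apply div_pow2_S. }
  assert (HS : forall n, H (S n) = H n / 2). { intros. unfold H. apply div_pow2_S. }
  set (Inv1 := fun n => x1 <= fst (s n) /\ fst (s n) + W n <= x2 /\ y1 <= snd (s n) /\ snd (s n) + H n <= y2 /\
      c / (2 ^ n * 2 ^ n) <= Cmod (Rect f (fst (s n)) (fst (s n) + W n) (snd (s n)) (snd (s n) + H n))).
  assert (Step : forall n, Inv1 n -> Inv1 (S n) /\ fst (s n) <= fst (s (S n)) /\ fst (s (S n)) + W (S n) <= fst (s n) + W n
      /\ snd (s n) <= snd (s (S n)) /\ snd (s (S n)) + H (S n) <= snd (s n) + H n).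
  { intros n [I1 [I2 [I3 [I4 I5]]]].
    pose proof (HW n). pose proof (HH n).
    pose proof (gstep_prop f (W n) (H n) (s n) (HW n) (HH n)) as G.
    destruct G as [G0 [G1 G2]].
    { intros z Hz. apply Hc. unfold InR in *. lra. }
    change (gstep f (W n) (H n) (s n)) with (s (S n)) in G0, G1, G2.
    rewrite <- WS, <- HS in G0.
    assert (E : c / (2 ^ S n * 2 ^ S n) = c / (2 ^ n * 2 ^ n) / 4) by (simpl; field; pose proof (pow2_pos n); lra).
    unfold Inv1. rewrite E. rewrite WS, HS in *.
    destruct G1 as [G1|G1]; destruct G2 as [G2|G2]; repeat split; try lra. }
  assert (Inv1_all : forall n, Inv1 n).
  { induction n as [|n IHn]. 2: apply Step; auto.
    unfold Inv1. unfold W, H. simpl. rewrite !Rdiv_1_r.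
    replace (x1 + (x2 - x1)) with x2 by ring. replace (y1 + (y2 - y1)) with y2 by ring.
    replace (c / (1 * 1)) with c by field. unfold c, w0, h0. repeat split; try lra. replace (x1 + (x2 - x1)) with x2 by ring. replace (y1 + (y2 - y1)) with y2 by ring. lra. }
  assert (Inv : forall n, Inv1 n /\ fst (s n) <= fst (s (S n)) /\ fst (s (S n)) + W (S n) <= fst (s n) + W n
      /\ snd (s n) <= snd (s (S n)) /\ snd (s (S n)) + H (S n) <= snd (s n) + H n).
  { intros n. split. apply Inv1_all. apply (proj2 (Step n (Inv1_all n))). }
  destruct (nested_lub (fun n => fst (s n)) W) as [a Ha]; try apply HW; try (intros n; apply Inv).
  destruct (nested_lub (fun n => snd (s n)) H) as [b Hb]; try apply HH; try (intros n; apply Inv).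
  set (zs := (a, b) : C).
  assert (Hz : InR x1 x2 y1 y2 zs).
  { unfold InR, zs; simpl. pose proof (Ha 0%nat). pose proof (Hb 0%nat). pose proof (Inv1_all 0%nat) as I0.
    unfold Inv1 in I0. simpl in *. lra. }
  destruct (Hd zs Hz) as [L HL].
  destruct (Rle_lt_or_eq_dec 0 c (Cmod_ge_0 _)) as [Hcp|Hc0].
  2:{ apply Cmod_eq_0. fold c. auto. }
  exfalso.
  set (K := (w0 + h0) * (w0 + h0)).
  assert (HK : 0 <= K) by (unfold K, w0, h0; nra).
  set (eps := c / (8 * K + 8)).
  assert (Heps : 0 < eps) by (unfold eps; apply Rdiv_lt_0_compat; lra).
  destruct (CD_eps f zs L HL eps Heps) as [dl [Hdl Hdl2]].
  destruct (archimed_cor1 (dl / (w0 + h0 + 1))) as [N [HN1 HN2]].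
  { apply Rdiv_lt_0_compat; unfold w0, h0 in *; lra. }
  assert (HWH : W N + H N < dl).
  { unfold W, H. pose proof (INR_le_pow2 N). pose proof (pow2_pos N).
    assert (0 < INR N) by (apply lt_0_INR; auto).
    replace (w0 / 2 ^ N + h0 / 2 ^ N) with ((w0 + h0) / 2 ^ N) by (field; apply Rgt_not_eq; apply pow2_pos).
    apply Rle_lt_trans with ((w0 + h0) * / INR N).
    unfold Rdiv. apply Rmult_le_compat_l. unfold w0, h0; lra. apply Rinv_le_contravar; auto.
    apply Rle_lt_trans with ((w0 + h0) * (dl / (w0 + h0 + 1))).
    apply Rmult_le_compat_l. unfold w0, h0; lra. lra.
    replace ((w0 + h0) * (dl / (w0 + h0 + 1))) with (dl * ((w0 + h0) / (w0 + h0 + 1))) by (field; unfold w0, h0; lra).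
    assert ((w0 + h0) / (w0 + h0 + 1) < 1).
    { apply (Rmult_lt_reg_r (w0 + h0 + 1)). unfold w0, h0; lra. unfold Rdiv. rewrite Rmult_assoc, Rinv_l. lra. unfold w0, h0; lra. }
    nra. }
  destruct (Inv1_all N) as [I1 [I2 [I3 [I4 I5]]]].
  set (A := fst (s N)) in *. set (B := snd (s N)) in *.
  pose proof (Ha N) as HaN. pose proof (Hb N) as HbN. simpl in HaN, HbN. fold A in HaN. fold B in HbN.
  set (Aff := fun w => (f zs + L * (w - zs))%C).
  set (Prim := fun w => (f zs * w + (L / 2) * ((w - zs) * (w - zs)))%C).
  assert (HP : forall w, CD Prim w (Aff w)).
  { intros w. unfold Prim, Aff. eapply CD_eq.
    apply CD_add. apply CD_scal. apply CD_id. apply CD_scal. apply CD_mul; apply CD_sub; [apply CD_id|apply CD_const|apply CD_id|apply CD_const].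
    cbv beta. field. }
  assert (HAc : forall w, Ccont Aff w) by (intros w; exact (CD_cont _ _ _ (CD_eq _ _ _ _ (CD_add _ _ w _ _ (CD_const (f zs) w) (CD_scal L _ w _ (CD_sub _ _ w _ _ (CD_id w) (CD_const zs w)))) eq_refl))).
  assert (Hin : forall w, InR A (A + W N) B (B + H N) w -> InR x1 x2 y1 y2 w).
  { intros w Hw. unfold InR in *. lra. }
  assert (Hsub : InR A (A + W N) B (B + H N) = InR A (A + W N) B (B + H N)) by auto.
  assert (E1 : Rect f A (A + W N) B (B + H N) =
      (Rect (fun w => f w - Aff w)%C A (A + W N) B (B + H N) + Rect Aff A (A + W N) B (B + H N))%C).
  { rewrite <- Rect_add. apply Rect_ext; try lra. apply OnB_InR; try lra. intros; ring.
    lra. lra. apply OnB_InR; try lra. intros w Hw. apply Ccont_sub. apply Hc; auto. apply HAc.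
    apply OnB_InR; try lra. intros w Hw. apply HAc. }
  rewrite (Rect_FTC Prim Aff) in E1; try lra.
  2:{ apply OnB_InR; try lra. intros w Hw. split; auto. }
  rewrite Cplus_0_r in E1.
  assert (Bd : Cmod (Rect (fun w => f w - Aff w)%C A (A + W N) B (B + H N)) <=
               4 * ((A + W N - A) + (B + H N - B)) * (eps * (W N + H N))).
  { apply Rect_bound; try lra.
    apply OnB_InR; try lra. intros w Hw. apply Ccont_sub. apply Hc; auto. apply HAc.
    apply OnB_InR; try lra. intros w Hw.
    assert (Hwz : Cmod (w - zs) <= W N + H N).
    { eapply Rle_trans. apply Cmod_le_sum. unfold zs. simpl. unfold InR in Hw.
      assert (Rabs (fst w + - a) <= W N) by (apply Rabs_le; lra).
      assert (Rabs (snd w + - b) <= H N) by (apply Rabs_le; lra). lra. }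
    specialize (Hdl2 w ltac:(lra)).
    unfold Aff. replace (f w - (f zs + L * (w - zs)))%C with (f w - f zs - L * (w - zs))%C by ring.
    eapply Rle_trans. exact Hdl2. apply Rmult_le_compat_l; lra. }
  rewrite <- E1 in Bd.
  replace (4 * (A + W N - A + (B + H N - B)) * (eps * (W N + H N))) with
    (4 * eps * K / (2 ^ N * 2 ^ N)) in Bd.
  2:{ unfold W, H, K. field. pose proof (pow2_pos N). lra. }
  assert (c <= 4 * eps * K).
  { pose proof (pow2_pos N). assert (0 < 2 ^ N * 2 ^ N) by nra.
    assert (c / (2 ^ N * 2 ^ N) <= 4 * eps * K / (2 ^ N * 2 ^ N)) by lra.
    unfold Rdiv in H2. apply Rmult_le_reg_r with (/ (2 ^ N * 2 ^ N)). apply Rinv_0_lt_compat; auto. auto. }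
  assert (4 * eps * K < c).
  { unfold eps. replace (4 * (c / (8 * K + 8)) * K) with (c * (4 * K / (8 * K + 8))) by (field; lra).
    assert (4 * K / (8 * K + 8) < 1).
    { apply (Rmult_lt_reg_r (8 * K + 8)). lra. unfold Rdiv. rewrite Rmult_assoc, Rinv_l by lra. lra. }
    nra. }
  lra.
Qed.

Lemma J1 c s : 0 < s -> RInt (fun t => (t - c) / ((t - c)^2 + s^2)) (c - s) (c + s) = 0.
Proof.
  intros Hs. 
  assert (Hp : forall t, 0 < (t - c)^2 + s^2) by (intros; pose proof (pow2_ge_0 (t - c)); pose proof (pow_lt s 2 Hs); lra).
  apply is_RInt_unique.
  replace 0 with (minus ((fun t => ln ((t - c)^2 + s^2) / 2) (c + s)) ((fun t => ln ((t - c)^2 + s^2) / 2) (c - s))).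
  apply (@is_RInt_derive R_CompleteNormedModule (fun t => ln ((t - c)^2 + s^2) / 2)).
  - intros x Hx. auto_derive. apply Hp. field. apply Rgt_not_eq, Hp.
  - intros x Hx. apply (@ex_derive_continuous R_AbsRing R_NormedModule). auto_derive. apply Rgt_not_eq, Hp.
  - simpl. unfold minus, plus, opp; simpl. replace (c + s - c) with s by ring. replace (c - s - c) with (-s) by ring.
    replace ((-s)^2) with (s^2) by ring. replace (- s * (- s * 1)) with (s * (s * 1)) by ring. ring.
Qed.
Lemma J2 c s : 0 < s -> RInt (fun t => s / ((t - c)^2 + s^2)) (c - s) (c + s) = PI / 2.
Proof.
  intros Hs. 
  assert (Hp : forall t, 0 < (t - c)^2 + s^2) by (intros; pose proof (pow2_ge_0 (t - c)); pose proof (pow_lt s 2 Hs); lra).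
  apply is_RInt_unique.
  replace (PI / 2) with (minus ((fun t => atan ((t - c) / s)) (c + s)) ((fun t => atan ((t - c) / s)) (c - s))).
  apply (@is_RInt_derive R_CompleteNormedModule (fun t => atan ((t - c) / s))).
  - intros x Hx. auto_derive. auto. field. split. apply Rgt_not_eq, Hp. lra.
  - intros x Hx. apply (@ex_derive_continuous R_AbsRing R_NormedModule). auto_derive. apply Rgt_not_eq, Hp.
  - simpl. unfold minus, plus, opp; simpl. replace ((c + s - c) / s) with 1 by (field; lra).
    replace ((c - s - c) / s) with (-1) by (field; lra). replace (-1) with (- (1)) by ring. rewrite atan_opp, atan_1. field.
Qed.

Lemma sq_pos_aux (u s : R) : 0 < s -> u ^ 2 + s ^ 2 <> 0.
Proof. intros Hs. pose proof (pow2_ge_0 u). pose proof (pow_lt s 2 Hs). lra. Qed.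

Ltac nzt := first [ apply Rgt_not_eq; apply Rplus_le_lt_0_compat; [apply Rle_0_sqr|assumption]
  | apply Rgt_not_eq; apply Rplus_lt_le_0_compat; [assumption|apply Rle_0_sqr] ].

Lemma K1 zr zi s : 0 < s ->
  Rect (fun w => / (w - (zr, zi)))%C (zr - s) (zr + s) (zi - s) (zi + s) = ((0, 2 * PI) : C).
Proof.
  intros Hs. unfold Rect.
  assert (Hs2 : 0 < s * s) by nra.
  assert (E1 : CI (fun t => / (ph (zi - s) t - (zr, zi)) * 1)%C (zr - s) (zr + s) = ((0, PI/2) : C)).
  { unfold CI. f_equal; [rewrite <- (J1 zr s Hs)|rewrite <- (J2 zr s Hs)]; apply RInt_ext; intros t _;
    unfold ph; simpl; field; nzt. }
  assert (E2 : CI (fun t => / (pv (zr + s) t - (zr, zi)) * Ci)%C (zi - s) (zi + s) = ((0, PI/2) : C)).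
  { unfold CI. f_equal; [rewrite <- (J1 zi s Hs)|rewrite <- (J2 zi s Hs)]; apply RInt_ext; intros t _;
    unfold pv; simpl; field; nzt. }
  assert (EX : forall c, ex_RInt (fun t => s / ((t - c) ^ 2 + s ^ 2)) (c - s) (c + s)).
  { intros c. apply exRI_cont. intros x _. apply (@ex_derive_continuous R_AbsRing R_NormedModule). auto_derive.
    apply sq_pos_aux; auto. }
  assert (E3 : CI (fun t => / (ph (zi + s) t - (zr, zi)) * 1)%C (zr - s) (zr + s) = ((0, - (PI/2)) : C)).
  { unfold CI. f_equal. rewrite <- (J1 zr s Hs). apply RInt_ext; intros t _;
    unfold ph; simpl; field; nzt.
    rewrite <- (J2 zr s Hs). replace (- RInt (fun t => s / ((t - zr) ^ 2 + s ^ 2)) (zr - s) (zr + s))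
      with (-1 * RInt (fun t => s / ((t - zr) ^ 2 + s ^ 2)) (zr - s) (zr + s)) by ring.
    rewrite <- (RI_scal _ _ _ (-1)) by apply EX.
    apply RInt_ext; intros t _.
    unfold ph; simpl; field; nzt. }
  assert (E4 : CI (fun t => / (pv (zr - s) t - (zr, zi)) * Ci)%C (zi - s) (zi + s) = ((0, - (PI/2)) : C)).
  { unfold CI. f_equal. rewrite <- (J1 zi s Hs). apply RInt_ext; intros t _;
    unfold pv; simpl; field; nzt.
    rewrite <- (J2 zi s Hs). replace (- RInt (fun t => s / ((t - zi) ^ 2 + s ^ 2)) (zi - s) (zi + s))
      with (-1 * RInt (fun t => s / ((t - zi) ^ 2 + s ^ 2)) (zi - s) (zi + s)) by ring.
    rewrite <- (RI_scal _ _ _ (-1)) by apply EX.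
    apply RInt_ext; intros t _.
    unfold pv; simpl; field; nzt. }
  rewrite E1, E2, E3, E4. apply injective_projections; simpl; field.
Qed.


Definition Phi (F : C -> C) (z L : C) : C -> C :=
  fun w => ((F w - F z - L * (w - z)) * / ((w - z) * (w - z)))%C.

Lemma Cneq_of_fst (w z : C) : fst w <> fst z -> (w - z)%C <> RtoC 0.
Proof. intros H E. apply H. apply (f_equal fst) in E. simpl in E. lra. Qed.
Lemma Cneq_of_snd (w z : C) : snd w <> snd z -> (w - z)%C <> RtoC 0.
Proof. intros H E. apply H. apply (f_equal snd) in E. simpl in E. lra. Qed.

Lemma sq_nz (u : C) : u <> RtoC 0 -> (u * u)%C <> RtoC 0.
Proof. intros H E. apply (f_equal Cmod) in E. rewrite Cmod_mult, Cmod_0 in E.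
  assert (0 < Cmod u) by (apply Cmod_gt_0; auto). nra. Qed.

Lemma CD_Phi F z L w Lw : (w - z)%C <> RtoC 0 -> CD F w Lw -> exists L', CD (Phi F z L) w L'.
Proof.
  intros Hn HF. eexists. unfold Phi.
  apply CD_mul. apply CD_sub. apply CD_sub. exact HF. apply CD_const.
  apply CD_scal. apply CD_sub. apply CD_id. apply CD_const.
  apply CD_inv. apply CD_mul; (apply CD_sub; [apply CD_id|apply CD_const]). apply sq_nz; auto.
Qed.

Definition Qs zr zi s := InR (zr - s) (zr + s) (zi - s) (zi + s).

Lemma three f zr zi s : 0 < s ->
  (forall w, Qs zr zi s w -> (fst w <> zr \/ snd w <> zi) -> exists L, CD f w L) ->
  Rect f (zr - s) (zr + s) (zi - s) (zi + s) = Rect f (zr - s/3) (zr + s/3) (zi - s/3) (zi + s/3).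
Proof.
  intros Hs HQ.
  assert (Hc : forall w, Qs zr zi s w -> (fst w <> zr \/ snd w <> zi) -> Ccont f w).
  { intros w H1 H2. destruct (HQ w H1 H2) as [L HL]. exact (CD_cont _ _ _ HL). }
  set (x0 := zr - s). set (x1 := zr - s/3). set (x2 := zr + s/3). set (x3 := zr + s).
  set (y0 := zi - s). set (y1 := zi - s/3). set (y2 := zi + s/3). set (y3 := zi + s).
  assert (OB : forall p q r t, x0 <= p -> p <= q -> q <= x3 -> y0 <= r -> r <= t -> t <= y3 ->
     p <> zr -> q <> zr -> r <> zi -> t <> zi -> OnB (Ccont f) p q r t).
  { intros p q r t H1 H2 H3 H4 H5 H6 H7 H8 H9 H10. split; intros u Hu; split; apply Hc;
    unfold Qs, InR, ph, pv in *; simpl; unfold x0, x3, y0, y3 in *; try lra; auto. }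
  assert (GS : forall p q r t, x0 <= p -> p <= q -> q <= x3 -> y0 <= r -> r <= t -> t <= y3 ->
     (q < zr \/ zr < p \/ t < zi \/ zi < r) -> Rect f p q r t = RtoC 0).
  { intros p q r t H1 H2 H3 H4 H5 H6 H7. apply goursat; auto. intros w Hw. apply HQ.
    unfold Qs, InR in *; unfold x0, x3, y0, y3 in *; lra.
    unfold InR in Hw. destruct H7 as [H7|[H7|[H7|H7]]]; [left|left|right|right]; lra. }
  assert (VL : forall x, x0 <= x <= x3 -> x <> zr -> forall t, y0 <= t <= y3 -> Ccont f (pv x t)).
  { intros x Hx Hn t Ht. apply Hc. unfold Qs, InR, pv; simpl. unfold x0, x3, y0, y3 in *. lra. left; auto. }
  assert (HL : forall y, y0 <= y <= y3 -> y <> zi -> forall p q, x0 <= p -> q <= x3 -> forall t, p <= t <= q -> Ccont f (ph y t)).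
  { intros y Hy Hn p q Hp Hq t Ht. apply Hc. unfold Qs, InR, ph; simpl. unfold x0, x3, y0, y3 in *. lra. right; auto. }
  assert (N1 : x1 <> zr) by (unfold x1; lra). assert (N2 : x2 <> zr) by (unfold x2; lra).
  assert (N0 : x0 <> zr) by (unfold x0; lra). assert (N3 : x3 <> zr) by (unfold x3; lra).
  assert (M1 : y1 <> zi) by (unfold y1; lra). assert (M2 : y2 <> zi) by (unfold y2; lra).
  assert (M0 : y0 <> zi) by (unfold y0; lra). assert (M3 : y3 <> zi) by (unfold y3; lra).
  assert (O01 : x0 <= x1) by (unfold x0, x1; lra). assert (O12 : x1 <= x2) by (unfold x1, x2; lra).
  assert (O23 : x2 <= x3) by (unfold x2, x3; lra).
  assert (P01 : y0 <= y1) by (unfold y0, y1; lra). assert (P12 : y1 <= y2) by (unfold y1, y2; lra).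
  assert (P23 : y2 <= y3) by (unfold y2, y3; lra).
  fold x0 x1 x2 x3 y0 y1 y2 y3.
  rewrite (Rect_vsplit f x0 x1 x3); try lra; [|apply OB; lra|apply VL; auto; lra].
  rewrite (Rect_vsplit f x1 x2 x3); try lra; [|apply OB; lra|apply VL; auto; lra].
  assert (Col : forall p q, x0 <= p -> p <= q -> q <= x3 -> p <> zr -> q <> zr ->
     Rect f p q y0 y3 = (Rect f p q y0 y1 + Rect f p q y1 y2 + Rect f p q y2 y3)%C).
  { intros p q H1 H2 H3 H4 H5.
    rewrite (Rect_hsplit f p q y0 y1 y3); try lra; [|apply OB; lra|apply HL; auto; lra].
    rewrite (Rect_hsplit f p q y1 y2 y3); try lra; [|apply OB; lra|apply HL; auto; lra].
    ring. }
  rewrite (Col x0 x1), (Col x1 x2), (Col x2 x3); try lra; auto.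
  rewrite (GS x0 x1 y0 y1), (GS x0 x1 y1 y2), (GS x0 x1 y2 y3), (GS x1 x2 y0 y1), (GS x1 x2 y2 y3),
    (GS x2 x3 y0 y1), (GS x2 x3 y1 y2), (GS x2 x3 y2 y3); try lra;
    unfold x0, x1, x2, x3, y0, y1, y2, y3; try lra.
  ring.
Qed.

Lemma pow3_pos k : 0 < 3 ^ k.
Proof. apply pow_lt. lra. Qed.

Lemma INR_le_pow3 n : INR n <= 3 ^ n.
Proof.
  assert (P1 : forall k, 1 <= 3 ^ k). { induction k. simpl; lra. simpl. lra. }
  induction n. simpl. lra. rewrite S_INR. replace (3 ^ S n) with (3 * 3 ^ n) by (simpl; ring).
  pose proof (P1 n). lra.
Qed.

Lemma three_iter f zr zi s : 0 < s ->
  (forall w, Qs zr zi s w -> (fst w <> zr \/ snd w <> zi) -> exists L, CD f w L) ->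
  forall k, Rect f (zr - s) (zr + s) (zi - s) (zi + s) =
    Rect f (zr - s / 3 ^ k) (zr + s / 3 ^ k) (zi - s / 3 ^ k) (zi + s / 3 ^ k).
Proof.
  intros Hs HQ k. induction k. simpl. rewrite Rdiv_1_r. auto.
  rewrite IHk. pose proof (pow3_pos k).
  replace (s / 3 ^ S k) with (s / 3 ^ k / 3) by (simpl; field; lra).
  apply three. apply Rdiv_lt_0_compat; lra.
  intros w Hw Hn. apply HQ; auto. unfold Qs, InR in *.
  assert (s / 3 ^ k <= s).
  { unfold Rdiv. assert (1 <= 3 ^ k) by (clear; induction k; simpl; lra).
    apply Rmult_le_reg_r with (3 ^ k). lra. rewrite Rmult_assoc, Rinv_l by lra. nra. }
  lra.
Qed.

Lemma bd_dist zr zi s : 0 < s ->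
  OnB (fun w => s <= Cmod (w - (zr, zi)) /\ Cmod (w - (zr, zi)) <= 2 * s) (zr - s) (zr + s) (zi - s) (zi + s).
Proof.
  intros Hs.
  assert (G : forall w, Rabs (fst w - zr) <= s -> Rabs (snd w - zi) <= s -> Cmod (w - (zr, zi)) <= 2 * s).
  { intros w H1 H2. eapply Rle_trans. apply Cmod_le_sum. simpl. unfold Rminus in *. lra. }
  assert (G1 : forall w, Rabs (fst w - zr) = s -> s <= Cmod (w - (zr, zi))).
  { intros w H. rewrite <- H. eapply Rle_trans. 2: apply fst_le_Cmod. simpl. unfold Rminus. lra. }
  assert (G2 : forall w, Rabs (snd w - zi) = s -> s <= Cmod (w - (zr, zi))).
  { intros w H. rewrite <- H. eapply Rle_trans. 2: apply snd_le_Cmod. simpl. unfold Rminus. lra. }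
  split; intros t Ht; repeat split;
  try (apply G; unfold ph, pv; simpl; apply Rabs_le; lra);
  try (apply G1; unfold ph, pv; simpl; first [rewrite Rabs_left by lra | rewrite Rabs_pos_eq by lra]; lra);
  try (apply G2; unfold ph, pv; simpl; first [rewrite Rabs_left by lra | rewrite Rabs_pos_eq by lra]; lra).
Qed.

Lemma Phi_zero F zr zi a L : 0 < a ->
  (forall w, Qs zr zi a w -> exists Lw, CD F w Lw) -> CD F (zr, zi) L ->
  Rect (Phi F (zr, zi) L) (zr - a) (zr + a) (zi - a) (zi + a) = RtoC 0.
Proof.
  intros Ha HF HL.
  assert (HQ : forall w, Qs zr zi a w -> (fst w <> zr \/ snd w <> zi) -> exists L', CD (Phi F (zr, zi) L) w L').
  { intros w Hw Hn. destruct (HF w Hw) as [Lw HLw]. apply (CD_Phi F (zr, zi) L w Lw); auto.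
    destruct Hn; [apply Cneq_of_fst|apply Cneq_of_snd]; auto. }
  set (I := Rect (Phi F (zr, zi) L) (zr - a) (zr + a) (zi - a) (zi + a)).
  apply Cmod_eq_0.
  destruct (Rle_lt_or_eq_dec 0 (Cmod I) (Cmod_ge_0 _)) as [Hp|E]; [exfalso|auto].
  set (eps := Cmod I / 32).
  assert (He : 0 < eps) by (unfold eps; lra).
  destruct (CD_eps F (zr, zi) L HL eps He) as [dl [Hdl Hd]].
  destruct (archimed_cor1 (dl / (2 * a + 1))) as [k [Hk1 Hk2]].
  { apply Rdiv_lt_0_compat; lra. }
  set (s := a / 3 ^ k).
  assert (Hs : 0 < s) by (unfold s; apply Rdiv_lt_0_compat; [lra|apply pow3_pos]).
  assert (Hsd : 2 * s < dl).
  { unfold s. pose proof (INR_le_pow3 k). pose proof (pow3_pos k).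
    assert (0 < INR k) by (apply lt_0_INR; auto).
    apply Rle_lt_trans with (2 * a * / INR k).
    unfold Rdiv. rewrite <- Rmult_assoc. apply Rmult_le_compat_l. lra. apply Rinv_le_contravar; auto.
    apply Rle_lt_trans with (2 * a * (dl / (2 * a + 1))). apply Rmult_le_compat_l; lra.
    replace (2 * a * (dl / (2 * a + 1))) with (dl * (2 * a / (2 * a + 1))) by (field; lra).
    assert (2 * a / (2 * a + 1) < 1).
    { apply (Rmult_lt_reg_r (2 * a + 1)). lra. unfold Rdiv. rewrite Rmult_assoc, Rinv_l; lra. }
    nra. }
  assert (Hsa : s <= a).
  { unfold s, Rdiv. assert (1 <= 3 ^ k) by (clear; induction k; simpl; lra).
    apply Rmult_le_reg_r with (3 ^ k). lra. rewrite Rmult_assoc, Rinv_l by lra. nra. }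
  pose proof (three_iter _ zr zi a Ha HQ k) as E. fold I s in E.
  assert (B : Cmod (Rect (Phi F (zr, zi) L) (zr - s) (zr + s) (zi - s) (zi + s)) <=
              4 * ((zr + s - (zr - s)) + (zi + s - (zi - s))) * (eps / s)).
  { apply Rect_bound; try lra.
    - apply (OnB_impl (fun w => (s <= Cmod (w - (zr, zi)) /\ Cmod (w - (zr, zi)) <= 2 * s) /\ Qs zr zi a w)).
      2:{ apply OnB_and. apply bd_dist; auto. apply OnB_InR; try lra. intros w Hw. unfold Qs, InR in *. lra. }
      intros w [[W1 W2] Wq].
      assert (Hwz : (w - (zr, zi))%C <> RtoC 0) by (intro EE; rewrite EE, Cmod_0 in W1; lra).
      destruct (HF w Wq) as [Lw HLw]. destruct (CD_Phi F (zr, zi) L w Lw Hwz HLw) as [L' HL'].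
      exact (CD_cont _ _ _ HL').
    - apply (OnB_impl (fun w => s <= Cmod (w - (zr, zi)) /\ Cmod (w - (zr, zi)) <= 2 * s)); [|apply bd_dist; auto].
      intros w [W1 W2].
      assert (Hwz : (w - (zr, zi))%C <> RtoC 0) by (intro EE; rewrite EE, Cmod_0 in W1; lra).
      specialize (Hd w ltac:(lra)).
      unfold Phi. rewrite Cmod_mult, Cmod_inv by (apply sq_nz; auto). rewrite Cmod_mult.
      set (m := Cmod (w - (zr, zi))) in *.
      apply Rle_trans with (eps * m * / (m * m)).
      apply Rmult_le_compat_r. left. apply Rinv_0_lt_compat. nra. auto.
      replace (eps * m * / (m * m)) with (eps / m) by (field; lra).
      unfold Rdiv. apply Rmult_le_compat_l. lra. apply Rinv_le_contravar; lra. }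
  rewrite <- E in B.
  replace (4 * (zr + s - (zr - s) + (zi + s - (zi - s))) * (eps / s)) with (16 * eps) in B by (field; lra).
  unfold eps in B. lra.
Qed.

Theorem cauchy_est F zr zi a M L : 0 < a ->
  (forall w, Qs zr zi a w -> exists Lw, CD F w Lw) ->
  (forall w, Qs zr zi a w -> Cmod (F w) <= M) -> CD F (zr, zi) L ->
  Cmod L <= 4 * M / a.
Proof.
  intros Ha HF HM HL.
  set (z := (zr, zi) : C).
  assert (HM0 : 0 <= M).
  { eapply Rle_trans. apply Cmod_ge_0. apply (HM z). unfold z, Qs, InR; simpl; lra. }
  set (k1 := fun w => (/ (w - (zr, zi)))%C).
  set (k2 := fun w => (/ ((w - (zr, zi)) * (w - (zr, zi))))%C).
  set (psi := fun w => (F w * k2 w)%C).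
  set (BP := fun w => (a <= Cmod (w - (zr, zi)) /\ Cmod (w - (zr, zi)) <= 2 * a) /\ Qs zr zi a w).
  assert (HB : OnB BP (zr - a) (zr + a) (zi - a) (zi + a)).
  { apply OnB_and. apply bd_dist; auto. apply OnB_InR; try lra. intros w Hw. exact Hw. }
  assert (Nz : forall w, BP w -> (w - (zr, zi))%C <> RtoC 0).
  { intros w [[W1 _] _] EE. rewrite EE, Cmod_0 in W1. lra. }
  assert (CDk1 : forall w, (w - (zr, zi))%C <> RtoC 0 -> CD k1 w (- (1 - 0) / ((w - (zr, zi)) * (w - (zr, zi))))%C).
  { intros w Hw. unfold k1. apply (CD_inv (fun u => u - (zr, zi))%C). apply CD_sub. apply CD_id. apply CD_const. auto. }
  assert (CDk2 : forall w, (w - (zr, zi))%C <> RtoC 0 -> exists L2, CD k2 w L2).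
  { intros w Hw. eexists. unfold k2. apply (CD_inv (fun u => (u - (zr, zi)) * (u - (zr, zi)))%C).
    apply CD_mul; (apply CD_sub; [apply CD_id|apply CD_const]). apply sq_nz; auto. }
  assert (Ck1 : OnB (Ccont k1) (zr - a) (zr + a) (zi - a) (zi + a)).
  { apply (OnB_impl BP); auto. intros w Hw. exact (CD_cont _ _ _ (CDk1 w (Nz w Hw))). }
  assert (Ck2 : OnB (Ccont k2) (zr - a) (zr + a) (zi - a) (zi + a)).
  { apply (OnB_impl BP); auto. intros w Hw. destruct (CDk2 w (Nz w Hw)) as [L2 H2]. exact (CD_cont _ _ _ H2). }
  assert (CPhi : OnB (Ccont (Phi F (zr, zi) L)) (zr - a) (zr + a) (zi - a) (zi + a)).
  { apply (OnB_impl BP); auto. intros w Hw. destruct (HF w (proj2 Hw)) as [Lw HLw].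
    destruct (CD_Phi F (zr, zi) L w Lw (Nz w Hw) HLw) as [L' HL']. exact (CD_cont _ _ _ HL'). }
  assert (Cpsi : OnB (Ccont psi) (zr - a) (zr + a) (zi - a) (zi + a)).
  { apply (OnB_impl BP); auto. intros w Hw. destruct (HF w (proj2 Hw)) as [Lw HLw].
    destruct (CDk2 w (Nz w Hw)) as [L2 H2]. unfold psi. apply Ccont_mul. exact (CD_cont _ _ _ HLw). exact (CD_cont _ _ _ H2). }
  assert (R2 : Rect k2 (zr - a) (zr + a) (zi - a) (zi + a) = RtoC 0).
  { apply (Rect_FTC (fun w => (-1) * / (w - (zr, zi)))%C); try lra.
    apply (OnB_impl BP); auto. intros w Hw. split.
    eapply CD_eq. apply CD_scal. apply (CD_inv (fun u => u - (zr, zi))%C). apply CD_sub. apply CD_id. apply CD_const.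
    apply Nz; auto. unfold k2. field. apply Nz; auto.
    destruct (CDk2 w (Nz w Hw)) as [L2 H2]. exact (CD_cont _ _ _ H2). }
  assert (R1 : Rect k1 (zr - a) (zr + a) (zi - a) (zi + a) = ((0, 2 * PI) : C)) by (apply K1; auto).
  assert (Rpsi : Rect psi (zr - a) (zr + a) (zi - a) (zi + a) = (L * ((0, 2 * PI)%R : C))%C).
  { rewrite (Rect_ext psi (fun w => Phi F (zr, zi) L w + (F z * k2 w + L * k1 w))%C); try lra.
    rewrite Rect_add; try lra; auto.
    rewrite Rect_add; try lra; auto.
    rewrite Rect_scal, Rect_scal; try lra; auto.
    rewrite (Phi_zero F zr zi a L), R1, R2; auto. ring.
    all: try (apply (OnB_impl (fun w => Ccont k2 w /\ Ccont k1 w)); [intros w [H1 H2]; first [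
       apply (Ccont_add (fun u => F z * k2 u)%C (fun u => L * k1 u)%C); [apply (Ccont_mul (fun _ => F z) k2); auto; apply Ccont_const | apply (Ccont_mul (fun _ => L) k1); auto; apply Ccont_const]
     | apply (Ccont_mul (fun _ => F z) k2); auto; apply Ccont_const
     | apply (Ccont_mul (fun _ => L) k1); auto; apply Ccont_const ] | apply OnB_and; auto]).
    apply (OnB_impl BP); auto. intros w Hw. unfold psi, Phi, k1, k2, z.
    field; apply Nz; auto. }
  assert (Bd : Cmod (Rect psi (zr - a) (zr + a) (zi - a) (zi + a)) <=
               4 * ((zr + a - (zr - a)) + (zi + a - (zi - a))) * (M / (a * a))).
  { apply Rect_bound; try lra; auto.
    apply (OnB_impl BP); auto. intros w Hw. pose proof (Nz w Hw) as Hn.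
    destruct Hw as [[W1 W2] Wq]. unfold psi, k2.
    rewrite Cmod_mult, Cmod_inv by (apply sq_nz; auto). rewrite Cmod_mult.
    set (m := Cmod (w - (zr, zi))) in *.
    pose proof (HM w Wq). pose proof (Cmod_ge_0 (F w)).
    apply Rle_trans with (M * / (m * m)).
    apply Rmult_le_compat_r; auto. left. apply Rinv_0_lt_compat. nra.
    unfold Rdiv. apply Rmult_le_compat_l; auto. apply Rinv_le_contravar; nra. }
  rewrite Rpsi, Cmod_mult in Bd.
  assert (E2 : Cmod ((0, 2 * PI) : C) = 2 * PI).
  { replace ((0, 2 * PI) : C) with (RtoC (2 * PI) * Ci)%C by (unfold RtoC, Ci; apply injective_projections; simpl; ring).
    rewrite Cmod_mult, Cmod_Ci, Cmod_R. rewrite Rabs_pos_eq. ring. pose proof PI_RGT_0. lra. }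
  rewrite E2 in Bd.
  replace (4 * (zr + a - (zr - a) + (zi + a - (zi - a))) * (M / (a * a))) with (16 * M / a) in Bd by (field; lra).
  pose proof PI2_1. pose proof (Cmod_ge_0 L).
  assert (Cmod L * 4 <= Cmod L * (2 * PI)) by (apply Rmult_le_compat_l; lra).
  apply Rmult_le_reg_r with 4. lra.
  replace (4 * M / a * 4) with (16 * M / a) by (field; lra). lra.
Qed.


Lemma ext_in (g : Dsk -> C) w (H : Cmod w < 1) : ext g w = g (exist _ w H).
Proof.
  unfold ext. destruct (Rlt_dec (Cmod w) 1) as [H'|H']. f_equal. f_equal. apply proof_irrelevance.
  contradiction.
Qed.

Lemma ext_sig (g : Dsk -> C) (z : Dsk) : ext g (proj1_sig z) = g z.
Proof. destruct z as [w H]. simpl. apply ext_in. Qed.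

Lemma hder_spec g z : holo g -> @is_derive C_AbsRing C_NormedModule (ext g) (proj1_sig z) (hder g z).
Proof.
  intros Hg. unfold hder.
  apply (epsilon_spec (inhabits (RtoC 0)) (fun l => @is_derive C_AbsRing C_NormedModule (ext g) (proj1_sig z) l)).
  apply (Hg z).
Qed.

Lemma hder_CD g z : holo g -> CD (ext g) (proj1_sig z) (hder g z).
Proof. intros. apply isd_CD. apply hder_spec; auto. Qed.

Lemma hder_val g z l : holo g -> CD (ext g) (proj1_sig z) l -> hder g z = l.
Proof. intros Hg H. apply (CD_unique (ext g) (proj1_sig z)). apply hder_CD; auto. auto. Qed.

Lemma ext_fsub a b : ext (fsub a b) = (fun w => ext a w - ext b w)%C.
Proof.
  apply functional_extensionality. intros w. unfold ext, fsub.
  destruct (Rlt_dec (Cmod w) 1). auto. ring.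
Qed.

Lemma ext_fscal c a : ext (fscal c a) = (fun w => c * ext a w)%C.
Proof.
  apply functional_extensionality. intros w. unfold ext, fscal.
  destruct (Rlt_dec (Cmod w) 1). auto. ring.
Qed.

Lemma ext_fzero : ext fzero = (fun _ => RtoC 0).
Proof. apply functional_extensionality. intros w. unfold ext, fzero. destruct (Rlt_dec (Cmod w) 1); auto. Qed.

Lemma holo_fsub a b : holo a -> holo b -> holo (fsub a b).
Proof.
  intros Ha Hb z. rewrite ext_fsub. exists (minus (hder a z) (hder b z)).
  apply (@is_derive_minus C_AbsRing C_NormedModule (ext a) (ext b)); apply hder_spec; auto.
Qed.

Lemma holo_fzero : holo fzero.
Proof. intros z. rewrite ext_fzero. exists zero. apply (@is_derive_const C_AbsRing C_NormedModule). Qed.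

Lemma hder_fsub a b z : holo a -> holo b -> hder (fsub a b) z = (hder a z - hder b z)%C.
Proof.
  intros Ha Hb. apply hder_val. apply holo_fsub; auto. rewrite ext_fsub.
  apply CD_sub; apply hder_CD; auto.
Qed.

Lemma hder_fscal c a z : holo a -> holo (fscal c a) -> hder (fscal c a) z = (c * hder a z)%C.
Proof.
  intros Ha Hb. apply hder_val. auto. rewrite ext_fscal. apply CD_scal. apply hder_CD; auto.
Qed.

Lemma hder_fzero z : hder fzero z = RtoC 0.
Proof. apply hder_val. apply holo_fzero. rewrite ext_fzero. apply CD_const. Qed.

Lemma lub_ub (E : R -> Prop) B x : (forall y, E y -> y <= B) -> E x -> x <= real (Lub_Rbar E).
Proof.
  intros HB Hx. destruct (Lub_Rbar_correct E) as [Hu Hl].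
  assert (H1 := Hu x Hx). assert (H2 := Hl (Finite B) (fun y Hy => HB y Hy)).
  destruct (Lub_Rbar E); simpl in *; auto; contradiction.
Qed.

Lemma lub_le (E : R -> Prop) B x : (forall y, E y -> y <= B) -> E x -> real (Lub_Rbar E) <= B.
Proof.
  intros HB Hx. destruct (Lub_Rbar_correct E) as [Hu Hl].
  assert (H1 := Hu x Hx). assert (H2 := Hl (Finite B) (fun y Hy => HB y Hy)).
  destruct (Lub_Rbar E); simpl in *; auto; contradiction.
Qed.

Lemma lub_approx (E : R -> Prop) B x : (forall y, E y -> y <= B) -> E x ->
  forall e, 0 < e -> exists y, E y /\ real (Lub_Rbar E) - e < y.
Proof.
  intros HB Hx e He. destruct (Lub_Rbar_correct E) as [Hu Hl].
  assert (H1 := Hu x Hx). assert (H2 := Hl (Finite B) (fun y Hy => HB y Hy)).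
  destruct (Lub_Rbar E) as [l| |] eqn:El; simpl in *; try contradiction.
  apply NNPP. intro NE.
  assert (Hub : is_ub_Rbar E (Finite (l - e))).
  { intros y Hy. simpl. apply Rnot_lt_le. intro Hlt. apply NE. exists y. split; auto. }
  specialize (Hl _ Hub). simpl in Hl. lra.
Qed.


Lemma Cmod_le_via (w z : C) a : Qs (fst z) (snd z) a w -> Cmod (w - z) <= 2 * a.
Proof.
  intros [H1 H2]. eapply Rle_trans. apply Cmod_le_sum. simpl.
  assert (Rabs (fst w + - fst z) <= a) by (apply Rabs_le; lra).
  assert (Rabs (snd w + - snd z) <= a) by (apply Rabs_le; lra). lra.
Qed.

Theorem weier (gn : nat -> Dsk -> C) g : (forall n, holo (gn n)) -> holo g -> uc_conv gn g ->
  forall rho, 0 <= rho < 1 -> forall eps, 0 < eps -> exists N : nat, forall n, (N <= n)%nat ->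
    forall z : Dsk, Cmod (proj1_sig z) <= rho -> Cmod (hder (gn n) z - hder g z) <= eps.
Proof.
  intros Hn Hg Hc rho Hr eps He.
  set (a := (1 - rho) / 4). set (Rr := (1 + rho) / 2). set (e' := eps * a / 4).
  assert (Ha : 0 < a) by (unfold a; lra).
  assert (He' : 0 < e') by (unfold e'; apply Rdiv_lt_0_compat; [apply Rmult_lt_0_compat|]; lra).
  destruct (Hc Rr ltac:(unfold Rr; lra) e' He') as [N HN].
  exists N. intros n Hnn z Hz.
  set (F := fun w => (ext (gn n) w - ext g w)%C).
  set (z' := proj1_sig z).
  assert (Ez : z' = (fst z', snd z')) by (destruct z'; auto).
  assert (Hin : forall w, Qs (fst z') (snd z') a w -> Cmod w <= Rr).
  { intros w Hw. pose proof (Cmod_le_via w z' a Hw). pose proof (Cmod_sub_le w z').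
    unfold z' in *. unfold Rr, a in *. lra. }
  assert (Hin1 : forall w, Qs (fst z') (snd z') a w -> Cmod w < 1).
  { intros w Hw. specialize (Hin w Hw). unfold Rr in Hin. lra. }
  assert (B : Cmod (hder (gn n) z - hder g z) <= 4 * e' / a).
  { apply (cauchy_est F (fst z') (snd z') a e'). exact Ha.
    - intros w Hw. pose (wd := exist (fun u => Cmod u < 1) w (Hin1 w Hw)).
      exists (hder (gn n) wd - hder g wd)%C. unfold F. apply CD_sub.
      apply (hder_CD (gn n) wd); auto. apply (hder_CD g wd); auto.
    - intros w Hw. unfold F. rewrite (ext_in (gn n) w (Hin1 w Hw)), (ext_in g w (Hin1 w Hw)).
      left. apply (HN n Hnn (exist _ w (Hin1 w Hw))). simpl. exact (Hin w Hw).
    - rewrite <- Ez. unfold F, z'. apply CD_sub; apply hder_CD; auto. }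
  replace (4 * e' / a) with eps in B by (unfold e'; field; lra). auto.
Qed.

Lemma small_zero (x : C) : (forall e, 0 < e -> Cmod x < e) -> x = RtoC 0.
Proof.
  intros H. apply Cmod_eq_0. destruct (Rle_lt_or_eq_dec 0 (Cmod x) (Cmod_ge_0 _)) as [Hp|E]; auto.
  specialize (H (Cmod x) Hp). lra.
Qed.

Lemma uc_point (gn : nat -> Dsk -> C) h (z : Dsk) w : uc_conv gn h ->
  (forall e, 0 < e -> exists N : nat, forall n, (N <= n)%nat -> Cmod (gn n z - w) < e) -> h z = w.
Proof.
  intros Hu Hp. assert (E : (h z - w)%C = RtoC 0).
  { apply small_zero. intros e He.
    destruct (Hu (Cmod (proj1_sig z)) ltac:(split; [apply Cmod_ge_0|apply (proj2_sig z)]) (e/2) ltac:(lra)) as [N1 H1].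
    destruct (Hp (e/2) ltac:(lra)) as [N2 H2].
    specialize (H1 (max N1 N2) (Nat.le_max_l _ _) z (Rle_refl _)).
    specialize (H2 (max N1 N2) (Nat.le_max_r _ _)).
    pose proof (Cmod_tri_sub (h z) (gn (max N1 N2) z) w). rewrite Cmod_sym in H1. lra. }
  replace (h z) with ((h z - w) + w)%C by ring. rewrite E. ring.
Qed.

Lemma uc_unique (gn : nat -> Dsk -> C) g1 g2 : uc_conv gn g1 -> uc_conv gn g2 -> g1 = g2.
Proof.
  intros H1 H2. apply functional_extensionality. intros z. apply (uc_point gn g1 z (g2 z) H1).
  intros e He. destruct (H2 (Cmod (proj1_sig z)) ltac:(split; [apply Cmod_ge_0|apply (proj2_sig z)]) e He) as [N HN].
  exists N. intros n Hn. apply HN; auto. lra.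
Qed.

Lemma sincr_ge phi : strict_incr phi -> forall n, (n <= phi n)%nat.
Proof. intros H n. induction n. lia. specialize (H n). lia. Qed.

Lemma sincr_mono phi : strict_incr phi -> forall m n, (m <= n)%nat -> (phi m <= phi n)%nat.
Proof. intros H m n Hmn. induction Hmn. lia. specialize (H m0). lia. Qed.

Lemma Tcont T (fn : nat -> Dsk -> C) f : intrinsic T -> (forall n, holo (fn n)) -> holo f -> uc_conv fn f ->
  uc_conv (fun n => T (fn n)) (T f).
Proof.
  intros [HT1 [HT2 [HT3 HT4]]] Hn Hf Hc.
  set (kn := fun n => if Nat.even n then fn (Nat.div2 n) else f).
  assert (Hk : uc_conv kn f).
  { intros r Hr e He. destruct (Hc r Hr e He) as [N HN]. exists (2 * N)%nat. intros n Hnn z Hz.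
    unfold kn. destruct (Nat.even n) eqn:Ev.
    - apply HN; auto. pose proof (Nat.div2_odd n). rewrite <- Nat.negb_even, Ev in H. simpl in H. lia.
    - replace (f z - f z)%C with (RtoC 0) by ring. rewrite Cmod_0. lra. }
  assert (Hkh : forall n, holo (kn n)) by (intros n; unfold kn; destruct (Nat.even n); auto).
  destruct (HT4 kn f Hkh Hf Hk) as [G HG].
  assert (EG : G = T f).
  { apply functional_extensionality. intros z.
    assert (E : (G z - T f z)%C = RtoC 0).
    { apply small_zero. intros e He.
      destruct (HG (Cmod (proj1_sig z)) ltac:(split; [apply Cmod_ge_0|apply (proj2_sig z)]) e He) as [N HN].
      specialize (HN (2 * N + 1)%nat ltac:(lia) z (Rle_refl _)).
      unfold kn in HN. rewrite Nat.even_odd in HN. rewrite Cmod_sym. auto. }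
    replace (G z) with ((G z - T f z) + T f z)%C by ring. rewrite E. ring. }
  rewrite <- EG. intros r Hr e He. destruct (HG r Hr e He) as [N HN]. exists N. intros n Hnn z Hz.
  specialize (HN (2 * n)%nat ltac:(lia) z Hz). unfold kn in HN. rewrite Nat.even_even, Nat.div2_double in HN. auto.
Qed.

Lemma bounded_sub X nX (fn : nat -> Dsk -> C) M : initial_space X nX -> (forall n, X (fn n)) ->
  (forall n, nX (fn n) <= M) ->
  exists phi h, strict_incr phi /\ X h /\ uc_conv (fun n => fn (phi n)) h.
Proof.
  intros [Hb [Hp Hi]] HX HM.
  set (c := / (Rabs M + 1)).
  assert (Hc : 0 < c) by (unfold c; apply Rinv_0_lt_compat; pose proof (Rabs_pos M); lra).
  destruct (Hi (fun n => fscal (RtoC c) (fn n))) as [phi [h0 [Hphi [Hh0 Hu]]]].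
  { intros n. split. apply (bs_scal _ _ Hb); auto. rewrite (bs_norm_scal _ _ Hb); auto.
    rewrite Cmod_R, Rabs_pos_eq by lra.
    pose proof (bs_norm_ge0 _ _ Hb (fn n) (HX n)). pose proof (HM n). pose proof (Rle_abs M).
    apply Rle_trans with (c * (Rabs M + 1)). apply Rmult_le_compat_l; lra.
    unfold c. rewrite Rinv_l. lra. pose proof (Rabs_pos M); lra. }
  exists phi, (fscal (RtoC (/ c)) h0). split. auto. split. apply (bs_scal _ _ Hb); auto.
  intros r Hr e He. destruct (Hu r Hr (e * c) ltac:(nra)) as [N HN]. exists N. intros n Hn z Hz.
  specialize (HN n Hn z Hz). unfold fscal in *.
  replace (fn (phi n) z - RtoC (/ c) * h0 z)%C with (RtoC (/ c) * (RtoC c * fn (phi n) z - h0 z))%C.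
  2:{ apply injective_projections; simpl; field; lra. }
  rewrite Cmod_mult, Cmod_R, Rabs_pos_eq by (left; apply Rinv_0_lt_compat; lra).
  apply Rmult_lt_reg_l with c. auto. rewrite <- Rmult_assoc, Rinv_r by lra. lra.
Qed.

Lemma dil_point f (z : Dsk) : holo f -> forall e, 0 < e -> exists dl, 0 < dl /\
  forall s, 0 <= s < 1 -> 1 - s < dl -> Cmod (dil s f z - f z) < e.
Proof.
  intros Hf e He. pose proof (CD_cont _ _ _ (hder_CD f z Hf)) as Hc.
  destruct (Hc e He) as [dl [Hdl H]]. exists dl. split; auto. intros s Hs Hsd.
  unfold dil. rewrite <- (ext_sig f z). apply H.
  replace (RtoC s * proj1_sig z - proj1_sig z)%C with (RtoC (s - 1) * proj1_sig z)%C
    by (unfold RtoC; apply injective_projections; simpl; ring).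
  rewrite Cmod_mult, Cmod_R. pose proof (proj2_sig z). simpl in H0. pose proof (Cmod_ge_0 (proj1_sig z)).
  rewrite Rabs_left1 by lra. nra.
Qed.

Fixpoint iter_sel (c : nat -> nat) (k : nat) : nat :=
  match k with O => c O | S k' => c (S (iter_sel c k')) end.

Lemma dil_conv X nX Cst f (sn : nat -> R) : initial_space X nX ->
  (forall f r, X f -> 0 <= r < 1 -> X (dil r f) /\ nX (dil r f) <= Cst * nX f) -> X f ->
  (forall n, 0 <= sn n < 1) -> (forall e, 0 < e -> exists N : nat, forall n, (N <= n)%nat -> 1 - e < sn n) ->
  uc_conv (fun n => dil (sn n) f) f.
Proof.
  intros HI Hdil Hf Hs Hlim. pose proof HI as [Hb _].
  apply NNPP. intro Hn.
  assert (Bad : exists r e, 0 <= r < 1 /\ 0 < e /\ forall N : nat, exists n, (N <= n)%nat /\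
     exists z : Dsk, Cmod (proj1_sig z) <= r /\ e <= Cmod (dil (sn n) f z - f z)).
  { apply NNPP; intro H'; apply Hn; intros r Hr e He; apply NNPP; intro H2; apply H'; exists r, e;
    split; auto; split; auto; intros N; apply NNPP; intro H3; apply H2; exists N; intros n Hnn z Hz;
    apply Rnot_le_lt; intro H4; apply H3; exists n; split; auto; exists z; auto. }
  destruct Bad as [r [e [Hr [He HB]]]].
  set (c := fun N => proj1_sig (constructive_indefinite_description _ (HB N))).
  assert (Hc : forall N, (N <= c N)%nat /\ exists z : Dsk, Cmod (proj1_sig z) <= r /\ e <= Cmod (dil (sn (c N)) f z - f z)).
  { intros N. unfold c. destruct (constructive_indefinite_description _ (HB N)) as [n Hn']. simpl. auto. }
  set (psi := iter_sel c).
  assert (Hpsi : strict_incr psi).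
  { intros k. unfold psi. simpl. destruct (Hc (S (iter_sel c k))). lia. }
  set (dk := fun k => dil (sn (psi k)) f).
  destruct (bounded_sub X nX dk (Cst * nX f) HI) as [phi [h [Hphi [Hh Hu]]]].
  { intros k. apply Hdil; auto. }
  { intros k. apply Hdil; auto. }
  assert (Eh : h = f).
  { apply functional_extensionality. intros z. apply (uc_point _ h z (f z) Hu).
    intros e' He'. destruct (dil_point f z (bs_holo _ _ Hb f Hf) e' He') as [dl [Hdl Hd]].
    destruct (Hlim dl Hdl) as [N HN]. exists N. intros k Hk. unfold dk. apply Hd. apply Hs.
    pose proof (sincr_ge phi Hphi k). pose proof (sincr_ge psi Hpsi (phi k)). specialize (HN (psi (phi k)) ltac:(lia)). lra. }
  rewrite Eh in Hu. destruct (Hu r Hr e He) as [K HK].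
  assert (Hpk : psi (phi K) = c (match phi K with O => O | S k' => S (psi k') end)).
  { unfold psi. destruct (phi K); reflexivity. }
  destruct (Hc (match phi K with O => O | S k' => S (psi k') end)) as [_ [z [Hz1 Hz2]]].
  rewrite <- Hpk in Hz2. specialize (HK K (le_n K) z Hz1). unfold dk in HK. lra.
Qed.


Lemma fscal_m1 g : fscal (RtoC (-1)) g = fsub fzero g.
Proof. apply functional_extensionality; intros z; unfold fscal, fsub, fzero. 
  unfold RtoC; apply injective_projections; simpl; ring. Qed.

Lemma T_fzero T : intrinsic T -> T fzero = fzero.
Proof.
  intros [H1 [H2 [H3 H4]]].
  assert (E : fzero = fscal (RtoC 0) fzero) by (apply functional_extensionality; intros z; unfold fscal, fzero; ring).
  rewrite E at 1. rewrite H3. apply functional_extensionality; intros z; unfold fscal, fzero; ring.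
  apply holo_fzero.
Qed.

Lemma T_fsub T f g : intrinsic T -> holo f -> holo g -> T (fsub f g) = fsub (T f) (T g).
Proof.
  intros HT Hf Hg. pose proof HT as [H1 [H2 [H3 H4]]].
  assert (Hm : holo (fscal (RtoC (-1)) g)) by (rewrite fscal_m1; apply holo_fsub; auto; apply holo_fzero).
  assert (E : fsub f g = fadd f (fscal (RtoC (-1)) g)).
  { apply functional_extensionality; intros z; unfold fscal, fsub, fadd.
    unfold RtoC; apply injective_projections; simpl; ring. }
  rewrite E, H2, H3; auto. apply functional_extensionality; intros z; unfold fscal, fsub, fadd.
  unfold RtoC; apply injective_projections; simpl; ring.
Qed.

Definition Sup (v : Dsk -> R) (h : Dsk -> C) : R :=
  real (Lub_Rbar (fun t => exists z : Dsk, t = v z * Cmod (hder h z))).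

Lemma Bv_norm_eq v h : Bv_norm v h = Cmod (h D0) + Sup v h.
Proof. reflexivity. Qed.

Lemma bv_le_sup v h : Bv v h -> forall z, v z * Cmod (hder h z) <= Sup v h.
Proof.
  intros [_ [M HM]] z. unfold Sup. apply (lub_ub _ M). intros y [w ->]. apply HM. exists z; auto.
Qed.

Lemma sup_le v h B : (forall z, v z * Cmod (hder h z) <= B) -> Sup v h <= B.
Proof. intros H. unfold Sup. apply (lub_le _ B (v D0 * Cmod (hder h D0))). intros y [w ->]. apply H. exists D0; auto. Qed.

Lemma bv_le_norm v h : Bv v h -> forall z, v z * Cmod (hder h z) <= Bv_norm v h.
Proof. intros H z. rewrite Bv_norm_eq. pose proof (Cmod_ge_0 (h D0)). pose proof (bv_le_sup v h H z). lra. Qed.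

Lemma Bv_fsub v a b : (forall z, 0 < v z) -> Bv v a -> Bv v b -> Bv v (fsub a b).
Proof.
  intros Hv [Ha [Ma HMa]] [Hb [Mb HMb]]. split. apply holo_fsub; auto.
  exists (Ma + Mb). intros z. rewrite hder_fsub by auto.
  pose proof (Cmod_tri_sub (hder a z) 0 (hder b z)).
  replace (hder a z - 0)%C with (hder a z) in H by ring.
  replace (0 - hder b z)%C with (- hder b z)%C in H by ring. rewrite Cmod_opp in H.
  specialize (HMa z). specialize (HMb z). specialize (Hv z). nra.
Qed.

Lemma Bv0_Bv v h : Bv0 v h -> Bv v h.
Proof. intros [H _]; auto. Qed.

Lemma nX_fzero X nX : banach_subspace X nX -> nX fzero = 0.
Proof.
  intros Hb. assert (E : fscal (RtoC 0) fzero = fzero) by (apply functional_extensionality; intros z; unfold fscal, fzero; ring).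
  rewrite <- E, (bs_norm_scal _ _ Hb). rewrite Cmod_0. ring. apply (bs_zero _ _ Hb).
Qed.

Lemma adj_facts v X nX T MT z : (forall z, 0 < v z) -> banach_subspace X nX -> intrinsic T ->
  (forall f, X f -> Bv v (T f)) -> (forall f, X f -> Bv_norm v (T f) <= MT * nX f) ->
  0 <= adj_Kder_norm X nX T z /\
  forall f, X f -> Cmod (hder (T f) z) <= adj_Kder_norm X nX T z * nX f.
Proof.
  intros Hv Hb HT HBv HM.
  set (E := fun t => exists f, X f /\ nX f <= 1 /\ t = Cmod (hder (T f) z)).
  assert (Hub : forall y, E y -> y <= Rabs MT / v z).
  { intros y [f [Hf [Hn ->]]]. pose proof (bv_le_norm v (T f) (HBv f Hf) z). pose proof (HM f Hf).
    pose proof (bs_norm_ge0 _ _ Hb f Hf). pose proof (Hv z).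
    assert (MT * nX f <= Rabs MT).
    { destruct (Rle_dec 0 MT). rewrite Rabs_pos_eq by auto. nra. rewrite Rabs_left by lra. nra. }
    apply Rmult_le_reg_l with (v z). auto. replace (v z * (Rabs MT / v z)) with (Rabs MT) by (field; lra). lra. }
  assert (E0 : E (Cmod (hder (T fzero) z))).
  { exists fzero. split. apply (bs_zero _ _ Hb). split. rewrite (nX_fzero X nX Hb). lra. auto. }
  assert (Hnn : 0 <= adj_Kder_norm X nX T z).
  { eapply Rle_trans. apply (Cmod_ge_0 (hder (T fzero) z)). apply (lub_ub E _ _ Hub E0). }
  split. auto. intros f Hf.
  pose proof HT as [HT1 [HT2 [HT3 HT4]]].
  destruct (Rle_lt_or_eq_dec 0 (nX f) (bs_norm_ge0 _ _ Hb f Hf)) as [Hp|E1].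
  - set (c := / nX f).
    assert (Hg : X (fscal (RtoC c) f)) by (apply (bs_scal _ _ Hb); auto).
    assert (Hng : nX (fscal (RtoC c) f) = 1).
    { rewrite (bs_norm_scal _ _ Hb) by auto. rewrite Cmod_R, Rabs_pos_eq. unfold c. field. lra.
      unfold c. left. apply Rinv_0_lt_compat. auto. }
    assert (Eg : T (fscal (RtoC c) f) = fscal (RtoC c) (T f)) by (apply HT3; apply (bs_holo _ _ Hb); auto).
    assert (Hd : hder (T (fscal (RtoC c) f)) z = (RtoC c * hder (T f) z)%C).
    { rewrite Eg. apply hder_fscal. apply HT1. apply (bs_holo _ _ Hb); auto. rewrite <- Eg. apply HT1. apply (bs_holo _ _ Hb); auto. }
    assert (Hl : Cmod (hder (T (fscal (RtoC c) f)) z) <= adj_Kder_norm X nX T z).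
    { apply (lub_ub E _ _ Hub). exists (fscal (RtoC c) f). split; auto. split; auto. lra. }
    rewrite Hd, Cmod_mult, Cmod_R, Rabs_pos_eq in Hl by (unfold c; left; apply Rinv_0_lt_compat; auto).
    unfold c in Hl. apply Rmult_le_reg_l with (/ nX f). apply Rinv_0_lt_compat; auto.
    replace (/ nX f * (adj_Kder_norm X nX T z * nX f)) with (adj_Kder_norm X nX T z) by (field; lra). auto.
  - rewrite <- E1. rewrite Rmult_0_r.
    assert (f = fzero) by (apply (bs_norm_eq0 _ _ Hb); auto). subst f.
    rewrite (T_fzero T HT), hder_fzero, Cmod_0. lra.
Qed.


Lemma hder_tri v a g z : (forall z, 0 < v z) -> holo a -> holo g ->
  v z * Cmod (hder g z) <= v z * Cmod (hder a z) + v z * Cmod (hder (fsub a g) z).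
Proof.
  intros Hv Ha Hg. rewrite hder_fsub by auto.
  pose proof (Cmod_tri_sub (hder g z) (hder a z) 0).
  replace (hder g z - 0)%C with (hder g z) in H by ring.
  replace (hder a z - 0)%C with (hder a z) in H by ring. rewrite Cmod_sym in H.
  specialize (Hv z). nra.
Qed.

Lemma closed_Bv0 v (an : nat -> Dsk -> C) g : (forall z, 0 < v z) -> (forall n, Bv0 v (an n)) -> Bv v g ->
  (forall e, 0 < e -> exists N : nat, forall n, (N <= n)%nat -> Bv_norm v (fsub (an n) g) < e) -> Bv0 v g.
Proof.
  intros Hv Han Hg Hc. split. auto. intros e He.
  destruct (Hc (e/2) ltac:(lra)) as [N HN]. specialize (HN N (le_n N)).
  destruct (Han N) as [HaB Ha0]. destruct (Ha0 (e/2) ltac:(lra)) as [rho [Hrho Hr]].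
  exists rho. split; auto. intros z Hz.
  pose proof (hder_tri v (an N) g z Hv (proj1 HaB) (proj1 Hg)).
  pose proof (bv_le_norm v (fsub (an N) g) (Bv_fsub v _ _ Hv HaB Hg) z).
  specialize (Hr z Hz). lra.
Qed.

Definition rn (n : nat) : R := 1 - / (INR n + 2).

Lemma rn_range n : 0 <= rn n < 1.
Proof.
  unfold rn. pose proof (pos_INR n). assert (0 < / (INR n + 2)) by (apply Rinv_0_lt_compat; lra).
  assert (/ (INR n + 2) <= / 2) by (apply Rinv_le_contravar; lra). lra.
Qed.

Lemma rn_lim phi : strict_incr phi -> forall e, 0 < e -> exists N : nat, forall n, (N <= n)%nat -> 1 - e < rn (phi n).
Proof.
  intros Hphi e He. destruct (archimed_cor1 e He) as [N [HN1 HN2]]. exists N. intros n Hn.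
  unfold rn. pose proof (sincr_ge phi Hphi n). assert (INR N <= INR (phi n)) by (apply le_INR; lia).
  assert (0 < INR N) by (apply lt_0_INR; lia).
  assert (/ (INR (phi n) + 2) <= / INR N) by (apply Rinv_le_contravar; lra). lra.
Qed.

Lemma i_to_ii v X nX Cst T : typical_weight v -> initial_space X nX ->
  (forall f r, X f -> 0 <= r < 1 -> X (dil r f) /\ nX (dil r f) <= Cst * nX f) ->
  intrinsic T -> bounded_op X nX v T ->
  (forall f r, X f -> 0 <= r < 1 -> Bv0 v (T (dil r f))) ->
  compact_op X nX v (Bv v) T -> compact_op X nX v (Bv0 v) T.
Proof.
  intros Hv HI Hdil HT HB H0 [Hc1 Hc2].
  assert (Hvp : forall z, 0 < v z) by (intros z; destruct Hv as [_ [_ [H _]]]; apply H).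
  pose proof HI as [Hb _]. pose proof HT as [HT1 _].
  assert (StepA : forall f, X f -> Bv0 v (T f)).
  { intros f Hf.
    set (fn := fun n => dil (rn n) f).
    destruct (Hc2 fn) as [phi [g [Hphi [Hg Hconv]]]].
    { intros n. apply Hdil; auto. apply rn_range. }
    { exists (Cst * nX f). intros n. apply Hdil; auto. apply rn_range. }
    assert (Hfn : forall n, X (fn n)) by (intros n; apply Hdil; auto; apply rn_range).
    assert (Hg0 : Bv0 v g).
    { apply (closed_Bv0 v (fun n => T (fn (phi n)))); auto. intros n. apply H0; auto. apply rn_range. }
    assert (Huc : uc_conv (fun n => fn (phi n)) f).
    { apply (dil_conv X nX Cst f (fun n => rn (phi n))); auto. intros; apply rn_range. apply rn_lim; auto. }
    assert (HucT : uc_conv (fun n => T (fn (phi n))) (T f)).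
    { apply Tcont; auto. intros n. apply (bs_holo _ _ Hb); auto. apply (bs_holo _ _ Hb); auto. }
    assert (Eq : forall z, hder (T f) z = hder g z).
    { intros z. assert (E : (hder (T f) z - hder g z)%C = RtoC 0).
      { apply small_zero. intros e He.
        destruct (weier (fun n => T (fn (phi n))) (T f)) with (rho := Cmod (proj1_sig z)) (eps := e/4) as [N1 HN1]; auto.
        intros n. apply HT1. apply (bs_holo _ _ Hb); auto. apply HT1. apply (bs_holo _ _ Hb); auto.
        split. apply Cmod_ge_0. apply (proj2_sig z). lra.
        destruct (Hconv (e/4 * v z)) as [N2 HN2]. specialize (Hvp z). nra.
        specialize (HN1 (max N1 N2) (Nat.le_max_l _ _) z (Rle_refl _)).
        specialize (HN2 (max N1 N2) (Nat.le_max_r _ _)).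
        set (a := T (fn (phi (max N1 N2)))) in *.
        assert (Ba : Bv v a) by (apply Hc1; auto).
        pose proof (bv_le_norm v (fsub a g) (Bv_fsub v a g Hvp Ba Hg) z).
        rewrite hder_fsub in H by (apply Ba || apply Hg).
        assert (Cmod (hder a z - hder g z) < e / 4).
        { specialize (Hvp z). apply Rmult_lt_reg_l with (v z). auto. nra. }
        pose proof (Cmod_tri_sub (hder (T f) z) (hder a z) (hder g z)). rewrite Cmod_sym in HN1. lra. }
      replace (hder (T f) z) with ((hder (T f) z - hder g z) + hder g z)%C by ring. rewrite E. ring. }
    split. apply (proj1 HB); auto. intros e He. destruct (proj2 Hg0 e He) as [rho [Hr1 Hr2]].
    exists rho. split; auto. intros z Hz. rewrite Eq. auto. }
  split. auto.
  intros fn Hfn Hbd. destruct (Hc2 fn Hfn Hbd) as [phi [g [Hphi [Hg Hconv]]]].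
  exists phi, g. split; auto. split; auto.
  apply (closed_Bv0 v (fun n => T (fn (phi n)))); auto.
Qed.

Lemma hder_tri2 v a g z : (forall z, 0 < v z) -> holo a -> holo g ->
  v z * Cmod (hder a z) <= v z * Cmod (hder g z) + v z * Cmod (hder (fsub a g) z).
Proof.
  intros Hv Ha Hg. rewrite hder_fsub by auto.
  pose proof (Cmod_tri_sub (hder a z) (hder g z) 0).
  replace (hder a z - 0)%C with (hder a z) in H by ring.
  replace (hder g z - 0)%C with (hder g z) in H by ring.
  specialize (Hv z). nra.
Qed.

Lemma ii_to_iii v X nX Cst T : typical_weight v -> initial_space X nX ->
  (forall f r, X f -> 0 <= r < 1 -> X (dil r f) /\ nX (dil r f) <= Cst * nX f) ->
  intrinsic T -> bounded_op X nX v T ->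
  compact_op X nX v (Bv0 v) T ->
  (forall eps, 0 < eps -> exists rho, rho < 1 /\
        forall z : Dsk, rho < Cmod (proj1_sig z) -> v z * adj_Kder_norm X nX T z < eps).
Proof.
  intros Hv HI Hdil HT HB [Hc1 Hc2] e He.
  assert (Hvp : forall z, 0 < v z) by (intros z; destruct Hv as [_ [_ [H _]]]; apply H).
  pose proof HI as [Hb _]. pose proof HT as [HT1 _].
  destruct HB as [HBv [MT HMT]].
  apply NNPP. intro Hn.
  assert (Hz : forall n : nat, exists p : Dsk * (Dsk -> C),
     1 - / (INR n + 1) < Cmod (proj1_sig (fst p)) /\ X (snd p) /\ nX (snd p) <= 1 /\
     e / 2 < v (fst p) * Cmod (hder (T (snd p)) (fst p))).
  { intros n.
    assert (Hex : exists z : Dsk, 1 - / (INR n + 1) < Cmod (proj1_sig z) /\ e <= v z * adj_Kder_norm X nX T z).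
    { apply NNPP. intro H'. apply Hn. exists (1 - / (INR n + 1)). split.
      assert (0 < / (INR n + 1)) by (apply Rinv_0_lt_compat; pose proof (pos_INR n); lra). lra.
      intros z Hz. apply Rnot_le_lt. intro H2. apply H'. exists z. split; auto. }
    destruct Hex as [z [Hz1 Hz2]].
    set (E := fun t => exists f, X f /\ nX f <= 1 /\ t = Cmod (hder (T f) z)).
    assert (Hub : forall y, E y -> y <= Rabs MT / v z).
    { intros y [f [Hf [Hnf ->]]]. pose proof (bv_le_norm v (T f) (HBv f Hf) z). pose proof (HMT f Hf).
      pose proof (bs_norm_ge0 _ _ Hb f Hf). pose proof (Hvp z).
      assert (MT * nX f <= Rabs MT).
      { destruct (Rle_dec 0 MT). rewrite Rabs_pos_eq by auto. nra. rewrite Rabs_left by lra. nra. }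
      apply Rmult_le_reg_l with (v z). auto. replace (v z * (Rabs MT / v z)) with (Rabs MT) by (field; specialize (Hvp z); lra). lra. }
    assert (E0 : E (Cmod (hder (T fzero) z))).
    { exists fzero. split. apply (bs_zero _ _ Hb). split. rewrite (nX_fzero X nX Hb). lra. auto. }
    destruct (lub_approx E _ _ Hub E0 (e / (2 * v z))) as [y [[f [Hf [Hnf ->]]] Hy]].
    { apply Rdiv_lt_0_compat. lra. specialize (Hvp z). lra. }
    exists (z, f). simpl. split; auto. split; auto. split; auto.
    assert (Hadj : adj_Kder_norm X nX T z = real (Lub_Rbar E)) by reflexivity.
    rewrite Hadj in Hz2.
    pose proof (Hvp z).
    apply Rmult_lt_compat_l with (r := v z) in Hy; auto.
    replace (v z * (real (Lub_Rbar E) - e / (2 * v z))) with (v z * real (Lub_Rbar E) - e / 2) in Hy by (field; lra).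
    lra. }
  set (zs := fun n => fst (proj1_sig (constructive_indefinite_description _ (Hz n)))).
  set (fs := fun n => snd (proj1_sig (constructive_indefinite_description _ (Hz n)))).
  assert (Hzs : forall n, 1 - / (INR n + 1) < Cmod (proj1_sig (zs n)) /\ X (fs n) /\ nX (fs n) <= 1 /\
     e / 2 < v (zs n) * Cmod (hder (T (fs n)) (zs n))).
  { intros n. unfold zs, fs. destruct (constructive_indefinite_description _ (Hz n)) as [p Hp]. simpl. auto. }
  destruct (Hc2 fs) as [phi [g [Hphi [Hg Hconv]]]].
  { intros n. apply Hzs. }
  { exists 1. intros n. apply Hzs. }
  destruct (proj2 Hg (e/4) ltac:(lra)) as [rg [Hrg1 Hrg2]].
  destruct (Hconv (e/4) ltac:(lra)) as [N1 HN1].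
  destruct (archimed_cor1 (1 - rg) ltac:(lra)) as [N2 [HN2a HN2b]].
  set (n := max N1 N2). set (m := phi n).
  assert (Hm : (N2 <= m)%nat) by (unfold m, n; pose proof (sincr_ge phi Hphi (max N1 N2)); lia).
  destruct (Hzs m) as [Z1 [Z2 [Z3 Z4]]].
  assert (Hzr : rg < Cmod (proj1_sig (zs m))).
  { assert (INR N2 <= INR m) by (apply le_INR; auto). assert (0 < INR N2) by (apply lt_0_INR; lia).
    assert (/ (INR m + 1) <= / INR N2) by (apply Rinv_le_contravar; lra). lra. }
  specialize (Hrg2 (zs m) Hzr). specialize (HN1 n (Nat.le_max_l _ _)). fold m in HN1.
  assert (Ba : Bv v (T (fs m))) by (apply Bv0_Bv; apply Hc1; auto).
  pose proof (hder_tri2 v (T (fs m)) g (zs m) Hvp (proj1 Ba) (proj1 (proj1 Hg))).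
  pose proof (bv_le_norm v _ (Bv_fsub v _ _ Hvp Ba (proj1 Hg)) (zs m)).
  lra.
Qed.

Lemma fsub_as_fadd f g : fsub f g = fadd f (fscal (RtoC (-1)) g).
Proof. apply functional_extensionality; intros z; unfold fscal, fsub, fadd.
  unfold RtoC; apply injective_projections; simpl; ring. Qed.

Lemma iii_to_ii v X nX Cst T : typical_weight v -> initial_space X nX ->
  (forall f r, X f -> 0 <= r < 1 -> X (dil r f) /\ nX (dil r f) <= Cst * nX f) ->
  intrinsic T -> bounded_op X nX v T ->
  (forall eps, 0 < eps -> exists rho, rho < 1 /\
        forall z : Dsk, rho < Cmod (proj1_sig z) -> v z * adj_Kder_norm X nX T z < eps) ->
  compact_op X nX v (Bv0 v) T.
Proof.
  intros Hv HI Hdil HT HB H3.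
  assert (Hvp : forall z, 0 < v z) by (intros z; destruct Hv as [_ [_ [H _]]]; apply H).
  assert (Hv1 : forall z, v z <= 1) by (intros z; destruct Hv as [_ [_ [H _]]]; apply H).
  pose proof HI as [Hb _]. pose proof HT as [HT1 _].
  pose proof HB as [HBv [MT HMT]].
  assert (Adj : forall z, 0 <= adj_Kder_norm X nX T z /\ forall f, X f -> Cmod (hder (T f) z) <= adj_Kder_norm X nX T z * nX f).
  { intros z. apply (adj_facts v X nX T MT z); auto. }
  assert (StepA : forall f, X f -> Bv0 v (T f)).
  { intros f Hf. split. auto. intros e He.
    pose proof (bs_norm_ge0 _ _ Hb f Hf).
    destruct (H3 (e / (nX f + 1))) as [rho [Hr1 Hr2]]. apply Rdiv_lt_0_compat; lra.
    exists rho. split; auto. intros z Hz. specialize (Hr2 z Hz). destruct (Adj z) as [A0 A1].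
    specialize (A1 f Hf). pose proof (Hvp z).
    apply Rle_lt_trans with (v z * adj_Kder_norm X nX T z * nX f). rewrite Rmult_assoc. apply Rmult_le_compat_l; lra.
    apply Rle_lt_trans with (e / (nX f + 1) * nX f). apply Rmult_le_compat_r; lra.
    apply Rmult_lt_reg_r with (nX f + 1). lra. replace (e / (nX f + 1) * nX f * (nX f + 1)) with (e * nX f) by (field; lra). nra. }
  split. auto.
  intros fn Hfn [M HM].
  destruct (bounded_sub X nX fn M HI Hfn HM) as [phi [f [Hphi [Hf Hu]]]].
  exists phi, (T f). split; auto. split. apply StepA; auto.
  set (hn := fun n => fsub (fn (phi n)) f).
  assert (Hhn : forall n, X (hn n)).
  { intros n. unfold hn. rewrite fsub_as_fadd. apply (bs_add _ _ Hb); auto. apply (bs_scal _ _ Hb); auto. }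
  set (B := M + nX f + 1).
  assert (HM0 : 0 <= M) by (pose proof (HM 0%nat); pose proof (bs_norm_ge0 _ _ Hb _ (Hfn 0%nat)); lra).
  pose proof (bs_norm_ge0 _ _ Hb f Hf).
  assert (HB0 : 0 < B) by (unfold B; lra).
  assert (Hnh : forall n, nX (hn n) <= B).
  { intros n. unfold hn. rewrite fsub_as_fadd.
    eapply Rle_trans. apply (bs_norm_tri _ _ Hb); auto. apply (bs_scal _ _ Hb); auto.
    rewrite (bs_norm_scal _ _ Hb) by auto. rewrite Cmod_R. replace (Rabs (-1)) with 1 by (rewrite Rabs_left; lra). specialize (HM (phi n)). unfold B. lra. }
  assert (ETh : forall n, T (hn n) = fsub (T (fn (phi n))) (T f)).
  { intros n. unfold hn. apply T_fsub; auto; apply (bs_holo _ _ Hb); auto. }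
  assert (Hu0 : uc_conv hn fzero).
  { intros r Hr e He. destruct (Hu r Hr e He) as [N HN]. exists N. intros n Hn z Hz.
    unfold hn, fsub, fzero. replace (fn (phi n) z - f z - 0)%C with (fn (phi n) z - f z)%C by ring. auto. }
  assert (HuT : uc_conv (fun n => T (hn n)) fzero).
  { rewrite <- (T_fzero T HT). apply Tcont; auto. intros n. apply (bs_holo _ _ Hb); auto. apply holo_fzero. }
  intros e He.
  destruct (H3 (e / (4 * B))) as [rho [Hr1 Hr2]]. apply Rdiv_lt_0_compat; lra.
  set (rho' := Rmax rho 0).
  destruct (weier (fun n => T (hn n)) fzero) with (rho := rho') (eps := e/4) as [N1 HN1].
  { intros n. apply HT1. apply (bs_holo _ _ Hb); auto. }
  apply holo_fzero. auto. unfold rho'. split. apply Rmax_r. apply Rmax_lub_lt; lra. lra.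
  destruct (HuT 0 ltac:(lra) (e/4) ltac:(lra)) as [N2 HN2].
  exists (max N1 N2). intros n Hn.
  rewrite <- ETh. rewrite Bv_norm_eq.
  assert (S1 : Cmod (T (hn n) D0) < e / 4).
  { specialize (HN2 n ltac:(lia) D0). unfold fzero in HN2. replace (T (hn n) D0 - 0)%C with (T (hn n) D0) in HN2 by ring.
    apply HN2. simpl. rewrite Cmod_0. lra. }
  assert (S2 : Sup v (T (hn n)) <= e / 2).
  { apply sup_le. intros z. destruct (Rle_dec (Cmod (proj1_sig z)) rho') as [Hz|Hz].
    - specialize (HN1 n ltac:(lia) z Hz). rewrite hder_fzero in HN1.
      replace (hder (T (hn n)) z - 0)%C with (hder (T (hn n)) z) in HN1 by ring.
      pose proof (Hvp z). pose proof (Hv1 z). pose proof (Cmod_ge_0 (hder (T (hn n)) z)). nra.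
    - assert (rho < Cmod (proj1_sig z)) by (pose proof (Rmax_l rho 0); fold rho' in H0; lra).
      specialize (Hr2 z H0). destruct (Adj z) as [A0 A1]. specialize (A1 (hn n) (Hhn n)).
      pose proof (Hvp z). pose proof (Hnh n). pose proof (bs_norm_ge0 _ _ Hb _ (Hhn n)).
      apply Rle_trans with (v z * adj_Kder_norm X nX T z * nX (hn n)). rewrite Rmult_assoc. apply Rmult_le_compat_l; lra.
      apply Rle_trans with (e / (4 * B) * B).
      apply Rle_trans with (v z * adj_Kder_norm X nX T z * B). apply Rmult_le_compat_l; nra.
      apply Rmult_le_compat_r; lra.
      replace (e / (4 * B) * B) with (e / 4) by (field; lra). lra. }
  lra.
Qed.

Theorem main_thm (v : Dsk -> R) (X : (Dsk -> C) -> Prop) (nX : (Dsk -> C) -> R)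
    (Cst : R) (T : (Dsk -> C) -> (Dsk -> C)) :
  typical_weight v ->
  initial_space X nX ->
  (forall f r, X f -> 0 <= r < 1 -> X (dil r f) /\ nX (dil r f) <= Cst * nX f) ->
  intrinsic T ->
  bounded_op X nX v T ->
  (forall f r, X f -> 0 <= r < 1 -> Bv0 v (T (dil r f))) ->
  (compact_op X nX v (Bv v) T <-> compact_op X nX v (Bv0 v) T) /\
  (compact_op X nX v (Bv0 v) T <->
     (forall eps, 0 < eps -> exists rho, rho < 1 /\
        forall z : Dsk, rho < Cmod (proj1_sig z) -> v z * adj_Kder_norm X nX T z < eps)).
Proof.
  intros Hv HI Hdil HT HB H0. split; split.
  - apply (i_to_ii v X nX Cst T); auto.
  - intros [Hc1 Hc2]. split. intros f Hf. apply Bv0_Bv; auto.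
    intros fn Hfn Hbd. destruct (Hc2 fn Hfn Hbd) as [phi [g [H1 [H2 H3]]]]. exists phi, g. split; auto. split; auto. apply Bv0_Bv; auto.
  - apply (ii_to_iii v X nX Cst T); auto.
  - apply (iii_to_ii v X nX Cst T); auto.
Qed.

Theorem theorem3p4 (v : Dsk -> R) (X : (Dsk -> C) -> Prop) (nX : (Dsk -> C) -> R)
    (Cst : R) (T : (Dsk -> C) -> (Dsk -> C)) :
  typical_weight v ->
  initial_space X nX ->
  (forall f r, X f -> 0 <= r < 1 -> X (dil r f) /\ nX (dil r f) <= Cst * nX f) ->
  intrinsic T ->
  bounded_op X nX v T ->
  (forall f r, X f -> 0 <= r < 1 -> Bv0 v (T (dil r f))) ->
  (compact_op X nX v (Bv v) T <-> compact_op X nX v (Bv0 v) T) /\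
  (compact_op X nX v (Bv0 v) T <->
     (forall eps, 0 < eps -> exists rho, rho < 1 /\
        forall z : Dsk, rho < Cmod (proj1_sig z) -> v z * adj_Kder_norm X nX T z < eps)).
Proof.
  exact (main_thm v X nX Cst T).
Qed.
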